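(* Let $v$ be a typical weight, let $T$ be an intrinsic operator on $\mathcal{H}(\mathbb{D})$ and let $X$ be an initial space. (i) Let $T:X\to H_v$ be bounded and for $N\in\mathbb{N}$ let $D_N=\{z\in\mathbb{D}:\|T^*K_z^H\|>N\}$. If $\lim_{N\to\infty}\sup_{z\in D_N}v(z)\|T^*K_z^H\|=0$, then $T:X\to H_v$ is compact. (ii) Let $T:X\to\mathcal{B}_v$ be bounded and for $N\in\mathbb{N}$ let $D_N=\{z\in\mathbb{D}:\|T^*K_{z,1}^{\mathcal{B}}\|>N\}$. If $\lim_{N\to\infty}\sup_{z\in D_N}v(z)\|T^*K_{z,1}^{\mathcal{B}}\|=0$, then $T:X\to\mathcal{B}_v$ is compact.
   Context: $\mathcal{H}(\mathbb{D})$ is the space of holomorphic functions on the unit disk $\mathbb{D}$ with the topology $\tau_{uc}$ of uniform convergence on compact subsets. A linear operator $T$ on $\mathcal{H}(\mathbb{D})$ is intrinsic if it maps $\tau_{uc}$-convergent sequences to $\tau_{uc}$-convergent sequences. An initial space is a Banach space $X\subset\mathcal{H}(\mathbb{D})$ containing the polynomials such that every sequence in the closed unit ball of $X$ has a subsequence converging in $\tau_{uc}$ to some function in $X$. A typical weight is a continuous radial $v:\mathbb{D}\to(0,1]$, non-increasing in $|z|$, with $v(z)\to0$ as $|z|\to1$. $H_v=\{f:\sup_z v(z)|f(z)|<\infty\}$ with that supremum as norm; $\mathcal{B}_v=\{f:\sup_z v(z)|f'(z)|<\infty\}$ with norm $|f(0)|+\sup_z v(z)|f'(z)|$. $K_z^H$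 is the point evaluation $g\mapsto g(z)$ on $H_v$, $K_{z,1}^{\mathcal{B}}$ the derivative point evaluation $g\mapsto g'(z)$ on $\mathcal{B}_v$, and $T^*$ the adjoint of $T:X\to H_v$ (resp. $\mathcal{B}_v$). *)

(* Defs.v *)
From Stdlib Require Import Reals.
From Coquelicot Require Import Coquelicot.
Open Scope R_scope.

(* Elements of H(D) are represented by functions C -> C; only their values on
   the open unit disk D matter. *)
Definition inD (z : C) : Prop := Cmod z < 1.

Definition holo (f : C -> C) : Prop :=
  forall z : C, inD z -> ex_derive (K := C_AbsRing) (V := C_NormedModule) f z.

Definition cderiv (f : C -> C) (z l : C) : Prop :=
  is_derive (K := C_AbsRing) (V := C_NormedModule) f z l.

Definition fminus (f g : C -> C) : C -> C := fun z => Cminus (f z) (g z).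
Definition flin (a : C) (f g : C -> C) : C -> C := fun z => Cplus (Cmult a (f z)) (g z).

(* tau_uc convergence: uniform convergence on compact subsets of D, i.e. on
   every closed disk {|z| <= r}, r < 1. *)
Definition uc_conv (fs : nat -> C -> C) (f : C -> C) : Prop :=
  forall r eps : R, 0 <= r < 1 -> 0 < eps ->
    exists N : nat, forall n : nat, (N <= n)%nat ->
      forall z : C, Cmod z <= r -> Cmod (Cminus (fs n z) (f z)) < eps.

Definition poly_fun (a : nat -> C) (n : nat) : C -> C :=
  fun z => sum_n (fun k => Cmult (a k) (pow_n z k)) n.

Definition linear_HD (T : (C -> C) -> (C -> C)) : Prop :=
  (forall f, holo f -> holo (T f)) /\
  (forall (a : C) f g, holo f -> holo g ->
     forall z, inD z -> T (flin a f g) z = flin a (T f) (T g) z).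

Definition intrinsic (T : (C -> C) -> (C -> C)) : Prop :=
  linear_HD T /\
  forall (fs : nat -> C -> C) (f : C -> C),
    (forall n, holo (fs n)) -> holo f -> uc_conv fs f ->
    exists h : C -> C, holo h /\ uc_conv (fun n => T (fs n)) h.

(* Banach space (Xs, nX) of holomorphic functions on D (over the scalars C),
   elements identified when they agree on D. *)
Definition banach_subspace_HD (Xs : (C -> C) -> Prop) (nX : (C -> C) -> R) : Prop :=
  (forall f, Xs f -> holo f) /\
  (forall f g, Xs f -> (forall z, inD z -> f z = g z) -> Xs g /\ nX g = nX f) /\
  Xs (fun _ => 0%C) /\
  (forall (a : C) f g, Xs f -> Xs g -> Xs (flin a f g)) /\
  (forall f, Xs f -> 0 <= nX f) /\
  (forall f, Xs f -> nX f = 0 -> forall z, inD z -> f z = 0%C) /\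
  (forall (a : C) f, Xs f -> nX (fun z => Cmult a (f z)) = Cmod a * nX f) /\
  (forall f g, Xs f -> Xs g -> nX (fun z => Cplus (f z) (g z)) <= nX f + nX g) /\
  (forall fs : nat -> C -> C, (forall n, Xs (fs n)) ->
     (forall eps, 0 < eps -> exists N, forall n m, (N <= n)%nat -> (N <= m)%nat ->
        nX (fminus (fs n) (fs m)) < eps) ->
     exists f, Xs f /\ is_lim_seq (fun n => nX (fminus (fs n) f)) 0).

Definition strict_incr (phi : nat -> nat) : Prop := forall n, (phi n < phi (S n))%nat.

Definition initial_space (Xs : (C -> C) -> Prop) (nX : (C -> C) -> R) : Prop :=
  banach_subspace_HD Xs nX /\
  (forall (a : nat -> C) (n : nat), Xs (poly_fun a n)) /\
  (forall fs : nat -> C -> C, (forall n, Xs (fs n) /\ nX (fs n) <= 1) ->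
     exists (phi : nat -> nat) (f : C -> C),
       strict_incr phi /\ Xs f /\ uc_conv (fun k => fs (phi k)) f).

Definition typical_weight (v : C -> R) : Prop :=
  (forall z, inD z -> continuous v z) /\
  (forall z, inD z -> 0 < v z <= 1) /\
  (forall z w, inD z -> inD w -> Cmod z = Cmod w -> v z = v w) /\
  (forall z w, inD w -> Cmod z <= Cmod w -> v w <= v z) /\
  (forall eps, 0 < eps -> exists r, 0 <= r < 1 /\
     forall z, inD z -> r < Cmod z -> v z < eps).

Definition in_Hv (v : C -> R) (f : C -> C) : Prop :=
  holo f /\ exists M, forall z, inD z -> v z * Cmod (f z) <= M.
Definition Hv_norm (v : C -> R) (f : C -> C) : R :=
  real (Lub_Rbar (fun x => exists z, inD z /\ x = v z * Cmod (f z))).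

Definition in_Bv (v : C -> R) (f : C -> C) : Prop :=
  holo f /\ exists M, forall z l, inD z -> cderiv f z l -> v z * Cmod l <= M.
Definition Bv_norm (v : C -> R) (f : C -> C) : R :=
  Cmod (f 0%C) +
  real (Lub_Rbar (fun x => exists z l, inD z /\ cderiv f z l /\ x = v z * Cmod l)).

Definition bounded_op (Xs : (C -> C) -> Prop) (nX : (C -> C) -> R)
    (Ys : (C -> C) -> Prop) (nY : (C -> C) -> R) (T : (C -> C) -> (C -> C)) : Prop :=
  (forall f, Xs f -> Ys (T f)) /\
  exists M, forall f, Xs f -> nY (T f) <= M * nX f.

Definition compact_op (Xs : (C -> C) -> Prop) (nX : (C -> C) -> R)
    (Ys : (C -> C) -> Prop) (nY : (C -> C) -> R) (T : (C -> C) -> (C -> C)) : Prop :=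
  forall fs : nat -> C -> C, (forall n, Xs (fs n) /\ nX (fs n) <= 1) ->
    exists (phi : nat -> nat) (g : C -> C),
      strict_incr phi /\ Ys g /\
      is_lim_seq (fun k => nY (fminus (T (fs (phi k))) g)) 0.

Definition dual_norm (Xs : (C -> C) -> Prop) (nX : (C -> C) -> R)
    (Lam : (C -> C) -> C -> Prop) : R :=
  real (Lub_Rbar (fun x => exists f c, Xs f /\ nX f <= 1 /\ Lam f c /\ x = Cmod c)).

(* T^* K_z^H : f |-> (T f)(z),  as a functional on X (relational form) *)
Definition adjT_KH (T : (C -> C) -> (C -> C)) (z : C) : (C -> C) -> C -> Prop :=
  fun f c => c = T f z.
(* T^* K_{z,1}^B : f |-> (T f)'(z) *)
Definition adjT_KB1 (T : (C -> C) -> (C -> C)) (z : C) : (C -> C) -> C -> Prop :=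
  fun f c => cderiv (T f) z c.

(* lim_{N->oo} sup_{z in D_N} v(z) * nrm(z) = 0, D_N = {z in D : nrm z > N},
   with sup of the empty set taken as 0 (all quantities are >= 0). *)
Definition sup_DN_tends_to_0 (v : C -> R) (nrm : C -> R) : Prop :=
  forall eps, 0 < eps -> exists N0 : nat, forall N : nat, (N0 <= N)%nat ->
    forall z, inD z -> INR N < nrm z -> v z * nrm z <= eps.

(* Main.v *)
Require Import Defs.
From Stdlib Require Import Reals Lra Arith Lia ZArith FunctionalExtensionality.
From Coquelicot Require Import Coquelicot.
Open Scope R_scope.

Lemma deriv_eps f p l : cderiv f p l -> forall eta, 0 < eta -> exists del, 0 < del /\ forall w, Cmod (w - p) < del -> Cmod (f w - f p - l * (w - p)) <= eta * Cmod (w - p).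
Proof.
intros [_ Hd] eta Heta.
destruct (Hd p (fun P H => H) (mkposreal _ Heta)) as [e He].
exists e; split; [apply cond_pos|].
intros w Hw. specialize (He w Hw). simpl in He.
replace (f w - f p - l * (w - p))%C with (minus (minus (f w) (f p)) (scal (minus w p) l)). exact He.
unfold minus, plus, opp, scal; simpl. unfold mult; simpl. change (f w + - f p + - ((w + - p) * l) = f w - f p - l * (w - p))%C. ring.
Qed.

Lemma eps_deriv f p l : (forall eta, 0 < eta -> exists del, 0 < del /\ forall w, Cmod (w - p) < del -> Cmod (f w - f p - l * (w - p)) <= eta * Cmod (w - p)) -> cderiv f p l.
Proof.
intros H. split. apply is_linear_scal_l.
intros x Hx. apply (@is_filter_lim_locally_unique C_AbsRing (AbsRing_NormedModule C_AbsRing)) in Hx. subst x.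
intros eps. destruct (H eps (cond_pos eps)) as [del [Hdel Hw]].
exists (mkposreal _ Hdel). intros w Hb. specialize (Hw w Hb).
unfold norm, minus, plus, opp, scal; simpl. unfold mult; simpl.
change (Cmod (f w + - f p + - ((w + - p) * l))%C <= eps * Cmod (w + - p)%C).
replace (f w + - f p + - ((w + - p) * l))%C with (f w - f p - l * (w - p))%C by ring. exact Hw.
Qed.

Definition Ccont (f : C -> C) (p : C) := forall eps, 0 < eps -> exists del, 0 < del /\ forall w, Cmod (w - p) < del -> Cmod (f w - f p) < eps.

Lemma deriv_cont f p l : cderiv f p l -> Ccont f p.
Proof.
intros Hd eps He. destruct (deriv_eps f p l Hd 1 Rlt_0_1) as [d [Hd0 Hw]].
exists (Rmin d (eps / (Cmod l + 2))). split.
- apply Rmin_glb_lt; auto. apply Rdiv_lt_0_compat; auto. pose proof (Cmod_ge_0 l); lra.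
- intros w Hlt. pose proof (Rmin_l d (eps / (Cmod l + 2))). pose proof (Rmin_r d (eps / (Cmod l + 2))).
  specialize (Hw w ltac:(lra)).
  replace (f w - f p)%C with ((f w - f p - l * (w - p)) + l * (w - p))%C by ring.
  eapply Rle_lt_trans. apply Cmod_triangle. rewrite Cmod_mult.
  pose proof (Cmod_ge_0 l). pose proof (Cmod_ge_0 (w - p)).
  assert (Cmod (w - p) < eps / (Cmod l + 2)) by lra.
  assert (Cmod (w-p) * (Cmod l + 2) < eps). { apply Rmult_lt_reg_r with (/ (Cmod l + 2)). apply Rinv_0_lt_compat; lra.
    rewrite Rmult_assoc, Rinv_r by lra. lra. }
  nra.
Qed.

Lemma Cmod_le_abs (z : C) : Cmod z <= Rabs (fst z) + Rabs (snd z).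
Proof.
unfold Cmod. apply Rsqr_incr_0_var. 2: pose proof (Rabs_pos (fst z)); pose proof (Rabs_pos (snd z)); lra.
rewrite Rsqr_sqrt. 2: nra.
unfold Rsqr. pose proof (Rabs_pos (fst z)); pose proof (Rabs_pos (snd z)).
replace (fst z ^ 2) with (Rabs (fst z) * Rabs (fst z)) by (rewrite <- Rabs_mult; rewrite Rabs_right; [ring|nra]).
replace (snd z ^ 2) with (Rabs (snd z) * Rabs (snd z)) by (rewrite <- Rabs_mult; rewrite Rabs_right; [ring|nra]).
nra.
Qed.

Lemma Cmod_ge_fst (z : C) : Rabs (fst z) <= Cmod z.
Proof. pose proof (Rmax_Cmod z). pose proof (Rmax_l (Rabs (fst z)) (Rabs (snd z))). lra. Qed.
Lemma Cmod_ge_snd (z : C) : Rabs (snd z) <= Cmod z.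
Proof. pose proof (Rmax_Cmod z). pose proof (Rmax_r (Rabs (fst z)) (Rabs (snd z))). lra. Qed.

Lemma cont_hor f x y : Ccont f (x, y) -> @continuous R_UniformSpace C_R_NormedModule (fun t => f (t, y)) x.
Proof.
intros Hc. apply (proj2 (filterlim_locally _ _)). intros eps.
destruct (Hc eps (cond_pos eps)) as [d [Hd Hw]].
exists (mkposreal _ Hd). intros t Ht. simpl in Ht. unfold ball in Ht; simpl in Ht. unfold AbsRing_ball in Ht; simpl in Ht.
specialize (Hw (t, y)).
assert (Hlt : Cmod (f (t, y) - f (x, y)) < eps).
{ apply Hw. eapply Rle_lt_trans. apply Cmod_le_abs. simpl. unfold abs, minus, plus, opp in Ht; simpl in Ht.
  replace (y + - y) with 0 by ring. rewrite Rabs_R0. lra. }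
split; simpl; unfold AbsRing_ball, abs, minus, plus, opp; simpl.
- eapply Rle_lt_trans; [|exact Hlt]. eapply Rle_trans; [|apply Cmod_ge_fst]. right. reflexivity.
- eapply Rle_lt_trans; [|exact Hlt]. eapply Rle_trans; [|apply Cmod_ge_snd]. right. reflexivity.
Qed.

Lemma cont_ver f x y : Ccont f (x, y) -> @continuous R_UniformSpace C_R_NormedModule (fun t => f (x, t)) y.
Proof.
intros Hc. apply (proj2 (filterlim_locally _ _)). intros eps.
destruct (Hc eps (cond_pos eps)) as [d [Hd Hw]].
exists (mkposreal _ Hd). intros t Ht. simpl in Ht. unfold ball in Ht; simpl in Ht. unfold AbsRing_ball in Ht; simpl in Ht.
specialize (Hw (x, t)).
assert (Hlt : Cmod (f (x, t) - f (x, y)) < eps).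
{ apply Hw. eapply Rle_lt_trans. apply Cmod_le_abs. simpl. unfold abs, minus, plus, opp in Ht; simpl in Ht.
  replace (x + - x) with 0 by ring. rewrite Rabs_R0. lra. }
split; simpl; unfold AbsRing_ball, abs, minus, plus, opp; simpl.
- eapply Rle_lt_trans; [|exact Hlt]. eapply Rle_trans; [|apply Cmod_ge_fst]. right. reflexivity.
- eapply Rle_lt_trans; [|exact Hlt]. eapply Rle_trans; [|apply Cmod_ge_snd]. right. reflexivity.
Qed.

Definition Int (g : R -> C) (a b : R) : C := @RInt C_R_CompleteNormedModule g a b.
Definition Ex (g : R -> C) (a b : R) : Prop := @ex_RInt C_R_NormedModule g a b.

Lemma norm_CR (z : C) : @norm R_AbsRing C_R_NormedModule z = Cmod z.
Proof.
unfold norm; simpl. unfold prod_norm, Cmod; simpl. unfold norm; simpl. unfold abs; simpl.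
f_equal. rewrite !Rmult_1_r, <- !Rabs_mult, !Rabs_pos_eq; [reflexivity|nra|nra].
Qed.

Lemma Int_correct g a b : Ex g a b -> @is_RInt C_R_NormedModule g a b (Int g a b).
Proof. intros H. exact (@RInt_correct C_R_CompleteNormedModule g a b H). Qed.

Lemma Int_unique g a b l : @is_RInt C_R_NormedModule g a b l -> Int g a b = l.
Proof. intros H. exact (@is_RInt_unique C_R_CompleteNormedModule g a b l H). Qed.

Lemma Int_bound g a b M : a <= b -> Ex g a b -> (forall t, a <= t <= b -> Cmod (g t) <= M) -> Cmod (Int g a b) <= (b - a) * M.
Proof.
intros Hab HE HM. rewrite <- norm_CR.
eapply (@norm_RInt_le C_R_NormedModule g (fun _ => M) a b). exact Hab.
intros t Ht. rewrite norm_CR. apply HM; auto.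
apply Int_correct; auto.
apply (@is_RInt_const R_NormedModule).
Qed.

Lemma Ex_cont g a b : a <= b -> (forall t, a <= t <= b -> @continuous R_UniformSpace C_R_NormedModule g t) -> Ex g a b.
Proof.
intros Hab H. apply (@ex_RInt_continuous C_R_CompleteNormedModule).
intros z Hz. rewrite Rmin_left, Rmax_right in Hz by lra. apply H; auto.
Qed.

Lemma is_RInt_Cmult g a b l k : @is_RInt C_R_NormedModule g a b l -> @is_RInt C_R_NormedModule (fun t => (k * g t)%C) a b (k * l)%C.
Proof.
intros H.
pose proof (@is_RInt_fct_extend_fst R_NormedModule R_NormedModule g a b l H) as H1.
pose proof (@is_RInt_fct_extend_snd R_NormedModule R_NormedModule g a b l H) as H2.
pose proof (is_RInt_minus _ _ _ _ _ _ (is_RInt_scal _ _ _ (fst k) _ H1) (is_RInt_scal _ _ _ (snd k) _ H2)) as H3.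
pose proof (is_RInt_plus _ _ _ _ _ _ (is_RInt_scal _ _ _ (fst k) _ H2) (is_RInt_scal _ _ _ (snd k) _ H1)) as H4.
assert (E : (k * l)%C = (minus (scal (fst k) (fst l)) (scal (snd k) (snd l)), plus (scal (fst k) (snd l)) (scal (snd k) (fst l)))).
{ unfold minus, plus, opp, scal; simpl. unfold mult; simpl. reflexivity. }
rewrite E.
apply (@is_RInt_fct_extend_pair R_NormedModule R_NormedModule).
- eapply is_RInt_ext; [|exact H3]. intros x _. unfold minus, plus, opp, scal; simpl. unfold mult; simpl. reflexivity.
- eapply is_RInt_ext; [|exact H4]. intros x _. unfold minus, plus, opp, scal; simpl. unfold mult; simpl. ring.
Qed.

Lemma Ex_Cmult g a b k : Ex g a b -> Ex (fun t => (k * g t)%C) a b.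
Proof. intros H. eexists. apply is_RInt_Cmult. apply Int_correct. exact H. Qed.

Lemma Int_Cmult g a b k : Ex g a b -> Int (fun t => (k * g t)%C) a b = (k * Int g a b)%C.
Proof. intros H. apply Int_unique. apply is_RInt_Cmult. apply Int_correct. exact H. Qed.

Lemma Ex_plus g h a b : Ex g a b -> Ex h a b -> Ex (fun t => (g t + h t)%C) a b.
Proof. intros H1 H2. eexists. apply (@is_RInt_plus C_R_NormedModule); apply Int_correct; eauto. Qed.

Lemma Int_plus g h a b : Ex g a b -> Ex h a b -> Int (fun t => (g t + h t)%C) a b = (Int g a b + Int h a b)%C.
Proof. intros H1 H2. apply Int_unique. apply (@is_RInt_plus C_R_NormedModule); apply Int_correct; eauto. Qed.

Lemma Ex_minus g h a b : Ex g a b -> Ex h a b -> Ex (fun t => (g t - h t)%C) a b.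
Proof. intros H1 H2. eexists. apply (@is_RInt_minus C_R_NormedModule); apply Int_correct; eauto. Qed.

Lemma Int_minus g h a b : Ex g a b -> Ex h a b -> Int (fun t => (g t - h t)%C) a b = (Int g a b - Int h a b)%C.
Proof. intros H1 H2. apply Int_unique. apply (@is_RInt_minus C_R_NormedModule); apply Int_correct; eauto. Qed.

Lemma Int_const (k : C) a b : Int (fun _ => k) a b = ((b - a) * k)%C.
Proof. rewrite (Int_unique _ _ _ _ (@is_RInt_const C_R_NormedModule a b k)).
unfold scal; simpl. unfold prod_scal; simpl. unfold scal; simpl. unfold mult; simpl.
apply injective_projections; simpl; ring.
Qed.

Lemma Ex_const (k : C) a b : Ex (fun _ => k) a b.
Proof. exists (scal (b - a) k). apply (@is_RInt_const C_R_NormedModule). Qed.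

Lemma Int_snd g a b : Ex g a b -> snd (Int g a b) = RInt (fun t => snd (g t)) a b.
Proof. intros H. symmetry. apply is_RInt_unique. apply (@is_RInt_fct_extend_snd R_NormedModule R_NormedModule). apply Int_correct. exact H. Qed.
Lemma Int_fst g a b : Ex g a b -> fst (Int g a b) = RInt (fun t => fst (g t)) a b.
Proof. intros H. symmetry. apply is_RInt_unique. apply (@is_RInt_fct_extend_fst R_NormedModule R_NormedModule). apply Int_correct. exact H. Qed.
Lemma Ex_snd g a b : Ex g a b -> ex_RInt (fun t => snd (g t)) a b.
Proof. intros H. eexists. apply (@is_RInt_fct_extend_snd R_NormedModule R_NormedModule). apply Int_correct. exact H. Qed.
Lemma Ex_fst g a b : Ex g a b -> ex_RInt (fun t => fst (g t)) a b.
Proof. intros H. eexists. apply (@is_RInt_fct_extend_fst R_NormedModule R_NormedModule). apply Int_correct. exact H. Qed.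

Lemma Int_chasles g a b c : Ex g a b -> Ex g b c -> (Int g a b + Int g b c)%C = Int g a c.
Proof. intros H1 H2. exact (@RInt_Chasles C_R_CompleteNormedModule g a b c H1 H2). Qed.

Lemma Int_ext g h a b : (forall t, Rmin a b <= t <= Rmax a b -> g t = h t) -> Int g a b = Int h a b.
Proof. intros H. apply (@RInt_ext C_R_CompleteNormedModule). intros; apply H; lra. Qed.

Lemma Ex_ext g h a b : (forall t, Rmin a b <= t <= Rmax a b -> g t = h t) -> Ex g a b -> Ex h a b.
Proof. intros H [l Hl]. exists l. eapply is_RInt_ext; [|exact Hl]. intros; apply H; lra. Qed.

Definition hor (f : C -> C) (y a b : R) : C := Int (fun x => f (x, y)) a b.
Definition ver (f : C -> C) (x a b : R) : C := Int (fun y => f (x, y)) a b.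
Definition Ci : C := (0, 1).
Definition I (f : C -> C) (x0 x1 y0 y1 : R) : C :=
  (hor f y0 x0 x1 + Ci * ver f x1 y0 y1 - hor f y1 x0 x1 - Ci * ver f x0 y0 y1)%C.

Definition cdiff (f : C -> C) (p : C) := exists l, cderiv f p l.
Definition DiffOn (f : C -> C) x0 x1 y0 y1 := forall x y, x0 <= x <= x1 -> y0 <= y <= y1 -> cdiff f (x, y).

Lemma Ex_hor_gen f y a b : a <= b -> (forall x, a <= x <= b -> cdiff f (x, y)) -> Ex (fun x => f (x, y)) a b.
Proof.
intros Hab H. apply Ex_cont; auto. intros t Ht. apply cont_hor. destruct (H t Ht) as [l Hl]. eapply deriv_cont; eauto.
Qed.
Lemma Ex_ver_gen f x a b : a <= b -> (forall y, a <= y <= b -> cdiff f (x, y)) -> Ex (fun y => f (x, y)) a b.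
Proof.
intros Hab H. apply Ex_cont; auto. intros t Ht. apply cont_ver. destruct (H t Ht) as [l Hl]. eapply deriv_cont; eauto.
Qed.

Lemma Ex_hor f x0 x1 y0 y1 y a b : DiffOn f x0 x1 y0 y1 -> y0 <= y <= y1 -> x0 <= a -> a <= b -> b <= x1 -> Ex (fun x => f (x, y)) a b.
Proof. intros H Hy H1 H2 H3. apply Ex_hor_gen; auto. intros x Hx. apply H; lra. Qed.
Lemma Ex_ver f x0 x1 y0 y1 x a b : DiffOn f x0 x1 y0 y1 -> x0 <= x <= x1 -> y0 <= a -> a <= b -> b <= y1 -> Ex (fun y => f (x, y)) a b.
Proof. intros H Hx H1 H2 H3. apply Ex_ver_gen; auto. intros y Hy. apply H; lra. Qed.

Lemma I_splitx f x0 m x1 y0 y1 :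
  Ex (fun x => f (x, y0)) x0 m -> Ex (fun x => f (x, y0)) m x1 ->
  Ex (fun x => f (x, y1)) x0 m -> Ex (fun x => f (x, y1)) m x1 ->
  I f x0 x1 y0 y1 = (I f x0 m y0 y1 + I f m x1 y0 y1)%C.
Proof.
intros H1 H2 H3 H4. unfold I, hor.
rewrite <- (Int_chasles _ x0 m x1 H1 H2), <- (Int_chasles _ x0 m x1 H3 H4). ring.
Qed.

Lemma I_splity f x0 x1 y0 m y1 :
  Ex (fun y => f (x0, y)) y0 m -> Ex (fun y => f (x0, y)) m y1 ->
  Ex (fun y => f (x1, y)) y0 m -> Ex (fun y => f (x1, y)) m y1 ->
  I f x0 x1 y0 y1 = (I f x0 x1 y0 m + I f x0 x1 m y1)%C.
Proof.
intros H1 H2 H3 H4. unfold I, ver.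
rewrite <- (Int_chasles _ y0 m y1 H1 H2), <- (Int_chasles _ y0 m y1 H3 H4). ring.
Qed.

Lemma is_RInt_id a b : is_RInt (fun x => x) a b ((b * b - a * a) / 2).
Proof.
replace ((b * b - a * a) / 2) with (minus (b * b / 2) (a * a / 2)).
2: unfold minus, plus, opp; simpl; field.
apply (is_RInt_derive (fun x => x * x / 2)).
- intros x _. auto_derive; auto. field.
- intros x _. apply continuous_id.
Qed.

Lemma is_RInt_cst (c a b : R) : is_RInt (fun _ => c) a b (c * (b - a)).
Proof. replace (c * (b - a)) with (scal (b - a) c). apply (@is_RInt_const R_NormedModule).
unfold scal; simpl; unfold mult; simpl; ring. Qed.

Lemma Int_hor_lin y a b : Int (fun x => ((x, y) : C)) a b = (((b * b - a * a) / 2, y * (b - a)) : C).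
Proof.
apply Int_unique. apply (@is_RInt_fct_extend_pair R_NormedModule R_NormedModule); simpl.
- apply is_RInt_id.
- apply is_RInt_cst.
Qed.

Lemma Int_ver_lin x a b : Int (fun y => ((x, y) : C)) a b = ((x * (b - a), (b * b - a * a) / 2) : C).
Proof.
apply Int_unique. apply (@is_RInt_fct_extend_pair R_NormedModule R_NormedModule); simpl.
- apply is_RInt_cst.
- apply is_RInt_id.
Qed.

Lemma Ex_hor_lin y a b : Ex (fun x => ((x, y) : C)) a b.
Proof. eexists. apply (@is_RInt_fct_extend_pair R_NormedModule R_NormedModule); simpl. apply is_RInt_id. apply is_RInt_cst. Qed.
Lemma Ex_ver_lin x a b : Ex (fun y => ((x, y) : C)) a b.
Proof. eexists. apply (@is_RInt_fct_extend_pair R_NormedModule R_NormedModule); simpl. apply is_RInt_cst. apply is_RInt_id. Qed.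

Lemma hor_aff A B y a b : hor (fun w => (A + B * w)%C) y a b = ((b - a) * A + B * ((((b * b - a * a) / 2)%R, (y * (b - a))%R) : C))%C.
Proof.
unfold hor. cbv beta.
rewrite (Int_plus (fun _ => A) (fun x => (B * (x, y))%C)).
rewrite Int_const.
rewrite (Int_Cmult (fun x => ((x, y) : C))).
rewrite Int_hor_lin. reflexivity.
apply Ex_hor_lin. apply (Ex_const A).
apply (Ex_Cmult (fun x => ((x,y):C))). apply Ex_hor_lin.
Qed.
Lemma ver_aff A B x a b : ver (fun w => (A + B * w)%C) x a b = ((b - a) * A + B * (((x * (b - a))%R, ((b * b - a * a) / 2)%R) : C))%C.
Proof.
unfold ver. cbv beta.
rewrite (Int_plus (fun _ => A) (fun y => (B * (x, y))%C)).
rewrite Int_const.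
rewrite (Int_Cmult (fun y => ((x, y) : C))).
rewrite Int_ver_lin. reflexivity.
apply Ex_ver_lin. apply (Ex_const A).
apply (Ex_Cmult (fun y => ((x,y):C))). apply Ex_ver_lin.
Qed.

Lemma I_aff A B x0 x1 y0 y1 : I (fun w => (A + B * w)%C) x0 x1 y0 y1 = 0%C.
Proof.
unfold I. rewrite !hor_aff, !ver_aff. destruct A as [a1 a2], B as [b1 b2].
unfold Ci. apply injective_projections; simpl; field.
Qed.

Lemma Cmod_Ci v : Cmod (Ci * v) = Cmod v.
Proof. rewrite Cmod_mult. unfold Ci, Cmod; simpl. replace (0 * (0 * 1) + 1 * (1 * 1)) with 1 by ring. rewrite sqrt_1. ring. Qed.

Lemma I_bound f x0 x1 y0 y1 M : x0 <= x1 -> y0 <= y1 ->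
  Ex (fun x => f (x, y0)) x0 x1 -> Ex (fun x => f (x, y1)) x0 x1 ->
  Ex (fun y => f (x0, y)) y0 y1 -> Ex (fun y => f (x1, y)) y0 y1 ->
  (forall x y, x0 <= x <= x1 -> y0 <= y <= y1 -> Cmod (f (x, y)) <= M) ->
  Cmod (I f x0 x1 y0 y1) <= 2 * ((x1 - x0) + (y1 - y0)) * M.
Proof.
intros Hx Hy E1 E2 E3 E4 HM. unfold I.
assert (B1 : Cmod (hor f y0 x0 x1) <= (x1 - x0) * M). { apply Int_bound; auto. intros; apply HM; lra. }
assert (B2 : Cmod (hor f y1 x0 x1) <= (x1 - x0) * M). { apply Int_bound; auto. intros; apply HM; lra. }
assert (B3 : Cmod (ver f x0 y0 y1) <= (y1 - y0) * M). { apply Int_bound; auto. intros; apply HM; lra. }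
assert (B4 : Cmod (ver f x1 y0 y1) <= (y1 - y0) * M). { apply Int_bound; auto. intros; apply HM; lra. }
set (a := hor f y0 x0 x1) in *. set (b := ver f x1 y0 y1) in *. set (c := hor f y1 x0 x1) in *. set (d := ver f x0 y0 y1) in *.
replace (a + Ci * b - c - Ci * d)%C with (a + Ci * b + (- c) + (- (Ci * d)))%C by ring.
eapply Rle_trans. apply Cmod_triangle. eapply Rle_trans. apply Rplus_le_compat_r. apply Cmod_triangle.
eapply Rle_trans. apply Rplus_le_compat_r. apply Rplus_le_compat_r. apply Cmod_triangle.
rewrite !Cmod_opp, !Cmod_Ci. lra.
Qed.

Lemma I_minus f g x0 x1 y0 y1 :
  Ex (fun x => f (x, y0)) x0 x1 -> Ex (fun x => f (x, y1)) x0 x1 ->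
  Ex (fun y => f (x0, y)) y0 y1 -> Ex (fun y => f (x1, y)) y0 y1 ->
  Ex (fun x => g (x, y0)) x0 x1 -> Ex (fun x => g (x, y1)) x0 x1 ->
  Ex (fun y => g (x0, y)) y0 y1 -> Ex (fun y => g (x1, y)) y0 y1 ->
  I (fun w => f w - g w)%C x0 x1 y0 y1 = (I f x0 x1 y0 y1 - I g x0 x1 y0 y1)%C.
Proof.
intros. unfold I, hor, ver. cbv beta.
rewrite (Int_minus (fun x => f (x, y0)) (fun x => g (x, y0))) by assumption.
rewrite (Int_minus (fun x => f (x, y1)) (fun x => g (x, y1))) by assumption.
rewrite (Int_minus (fun y => f (x0, y)) (fun y => g (x0, y))) by assumption.
rewrite (Int_minus (fun y => f (x1, y)) (fun y => g (x1, y))) by assumption.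
ring.
Qed.

Lemma Ex_hor_aff A B y a b : Ex (fun x => (A + B * (x, y))%C) a b.
Proof. apply (Ex_plus (fun _ => A) (fun x => (B * (x,y))%C)). apply Ex_const. apply (Ex_Cmult (fun x => ((x,y):C))). apply Ex_hor_lin. Qed.
Lemma Ex_ver_aff A B x a b : Ex (fun y => (A + B * (x, y))%C) a b.
Proof. apply (Ex_plus (fun _ => A) (fun y => (B * (x,y))%C)). apply Ex_const. apply (Ex_Cmult (fun y => ((x,y):C))). apply Ex_ver_lin. Qed.

Lemma I_local f x0 x1 y0 y1 p d eta : x0 <= x1 -> y0 <= y1 -> DiffOn f x0 x1 y0 y1 ->
  x0 <= fst p <= x1 -> y0 <= snd p <= y1 ->
  (forall w, x0 <= fst w <= x1 -> y0 <= snd w <= y1 -> Cmod (f w - f p - d * (w - p)) <= eta * Cmod (w - p)) ->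
  0 <= eta ->
  Cmod (I f x0 x1 y0 y1) <= 2 * ((x1 - x0) + (y1 - y0)) * (eta * ((x1 - x0) + (y1 - y0))).
Proof.
intros Hx Hy HD Hpx Hpy Hw Heta.
set (A := (f p - d * p)%C).
assert (E : I f x0 x1 y0 y1 = I (fun w => f w - (A + d * w))%C x0 x1 y0 y1).
{ rewrite (I_minus f (fun w => (A + d * w)%C)).
  rewrite I_aff. ring.
  eapply Ex_hor; eauto; lra. eapply Ex_hor; eauto; lra. eapply Ex_ver; eauto; lra. eapply Ex_ver; eauto; lra.
  apply Ex_hor_aff. apply Ex_hor_aff. apply Ex_ver_aff. apply Ex_ver_aff. }
rewrite E. apply I_bound; auto.
- cbv beta. apply (Ex_minus (fun x => f (x, y0)) (fun x => (A + d * (x, y0))%C)). eapply Ex_hor; eauto; lra. apply Ex_hor_aff.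
- cbv beta. apply (Ex_minus (fun x => f (x, y1)) (fun x => (A + d * (x, y1))%C)). eapply Ex_hor; eauto; lra. apply Ex_hor_aff.
- cbv beta. apply (Ex_minus (fun y => f (x0, y)) (fun y => (A + d * (x0, y))%C)). eapply Ex_ver; eauto; lra. apply Ex_ver_aff.
- cbv beta. apply (Ex_minus (fun y => f (x1, y)) (fun y => (A + d * (x1, y))%C)). eapply Ex_ver; eauto; lra. apply Ex_ver_aff.
- intros x y Hx' Hy'. replace (f (x, y) - (A + d * (x, y)))%C with (f (x, y) - f p - d * ((x, y) - p))%C by (unfold A; ring).
  eapply Rle_trans. apply Hw; simpl; lra.
  apply Rmult_le_compat_l; auto. eapply Rle_trans. apply Cmod_le_abs.
  destruct p as [px py]; simpl in *.
  apply Rplus_le_compat; unfold Rabs; destruct Rcase_abs; lra.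
Qed.

Record rect := mkR { rx0 : R; rx1 : R; ry0 : R; ry1 : R }.
Definition IR f r := I f (rx0 r) (rx1 r) (ry0 r) (ry1 r).
Definition mx r := (rx0 r + rx1 r) / 2.
Definition my r := (ry0 r + ry1 r) / 2.
Definition q1 r := mkR (rx0 r) (mx r) (ry0 r) (my r).
Definition q2 r := mkR (mx r) (rx1 r) (ry0 r) (my r).
Definition q3 r := mkR (rx0 r) (mx r) (my r) (ry1 r).
Definition q4 r := mkR (mx r) (rx1 r) (my r) (ry1 r).
Definition DiffR f r := DiffOn f (rx0 r) (rx1 r) (ry0 r) (ry1 r).
Definition wf r := rx0 r <= rx1 r /\ ry0 r <= ry1 r.

Lemma quad f r : wf r -> DiffR f r -> IR f r = (IR f (q1 r) + IR f (q2 r) + IR f (q3 r) + IR f (q4 r))%C.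
Proof.
intros [Hx Hy] HD. unfold DiffR in HD. unfold IR, q1, q2, q3, q4, mx, my; simpl.
set (x0 := rx0 r) in *. set (x1 := rx1 r) in *. set (y0 := ry0 r) in *. set (y1 := ry1 r) in *.
set (m := (x0 + x1) / 2). set (n := (y0 + y1) / 2).
assert (Hm : x0 <= m <= x1) by (unfold m; lra). assert (Hn : y0 <= n <= y1) by (unfold n; lra).
rewrite (I_splitx f x0 m x1 y0 y1).
2,3: eapply Ex_hor; [exact HD|..]; try split; lra.
2,3: eapply Ex_hor; [exact HD|..]; try split; lra.
rewrite (I_splity f x0 m y0 n y1).
2,3: eapply Ex_ver; [exact HD|..]; try split; lra.
2,3: eapply Ex_ver; [exact HD|..]; try split; lra.
rewrite (I_splity f m x1 y0 n y1).
2,3: eapply Ex_ver; [exact HD|..]; try split; lra.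
2,3: eapply Ex_ver; [exact HD|..]; try split; lra.
ring.
Qed.

Definition pick f r :=
  if Rle_dec (Cmod (IR f r) / 4) (Cmod (IR f (q1 r))) then q1 r else
  if Rle_dec (Cmod (IR f r) / 4) (Cmod (IR f (q2 r))) then q2 r else
  if Rle_dec (Cmod (IR f r) / 4) (Cmod (IR f (q3 r))) then q3 r else q4 r.

Lemma pick_cases f r : pick f r = q1 r \/ pick f r = q2 r \/ pick f r = q3 r \/ pick f r = q4 r.
Proof. unfold pick. destruct Rle_dec; auto. destruct Rle_dec; auto. destruct Rle_dec; auto. Qed.

Lemma pick_big f r : wf r -> DiffR f r -> Cmod (IR f r) / 4 <= Cmod (IR f (pick f r)).
Proof.
intros Hw HD. unfold pick. destruct Rle_dec; auto. destruct Rle_dec; auto. destruct Rle_dec; auto.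
rewrite (quad f r Hw HD) at 1.
pose proof (Cmod_triangle (IR f (q1 r) + IR f (q2 r) + IR f (q3 r)) (IR f (q4 r))).
pose proof (Cmod_triangle (IR f (q1 r) + IR f (q2 r)) (IR f (q3 r))).
pose proof (Cmod_triangle (IR f (q1 r)) (IR f (q2 r))).
rewrite (quad f r Hw HD) in n, n0, n1. lra.
Qed.

Definition sub r s := rx0 r <= rx0 s /\ rx1 s <= rx1 r /\ ry0 r <= ry0 s /\ ry1 s <= ry1 r /\
  rx1 s - rx0 s = (rx1 r - rx0 r) / 2 /\ ry1 s - ry0 s = (ry1 r - ry0 r) / 2.

Lemma pick_sub f r : wf r -> sub r (pick f r).
Proof.
intros [Hx Hy]. destruct (pick_cases f r) as [E|[E|[E|E]]]; rewrite E; unfold sub, q1, q2, q3, q4, mx, my; simpl; lra.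
Qed.

Lemma sub_wf r s : wf r -> sub r s -> wf s.
Proof. unfold wf, sub; lra. Qed.

Lemma DiffR_sub f r s : DiffR f r -> sub r s -> DiffR f s.
Proof. unfold DiffR, DiffOn, sub. intros H Hs x y Hx Hy. apply H; lra. Qed.

Fixpoint rs f r0 (k : nat) : rect := match k with O => r0 | S k => pick f (rs f r0 k) end.

Lemma rs_props f r0 : wf r0 -> DiffR f r0 -> forall k,
  wf (rs f r0 k) /\ DiffR f (rs f r0 k) /\
  rx1 (rs f r0 k) - rx0 (rs f r0 k) = (rx1 r0 - rx0 r0) / 2 ^ k /\
  ry1 (rs f r0 k) - ry0 (rs f r0 k) = (ry1 r0 - ry0 r0) / 2 ^ k /\
  Cmod (IR f r0) <= Cmod (IR f (rs f r0 k)) * 4 ^ k.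
Proof.
intros Hw HD k. induction k as [|k [W [D [X [Y C]]]]].
- simpl. repeat split; try apply Hw; auto; try field. lra.
- simpl. pose proof (pick_sub f _ W) as S. pose proof (pick_big f _ W D) as B.
  split. eapply sub_wf; eauto. split. eapply DiffR_sub; eauto.
  destruct S as [S1 [S2 [S3 [S4 [S5 S6]]]]].
  split. rewrite S5, X. field. apply pow_nonzero; lra.
  split. rewrite S6, Y. field. apply pow_nonzero; lra.
  assert (0 < 4 ^ k) by (apply pow_lt; lra). nra.
Qed.

Lemma rs_mono f r0 : wf r0 -> DiffR f r0 -> forall j m, (j <= m)%nat ->
  rx0 (rs f r0 j) <= rx0 (rs f r0 m) /\ rx1 (rs f r0 m) <= rx1 (rs f r0 j) /\
  ry0 (rs f r0 j) <= ry0 (rs f r0 m) /\ ry1 (rs f r0 m) <= ry1 (rs f r0 j).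
Proof.
intros Hw HD j m Hjm. induction Hjm.
- lra.
- destruct (rs_props f r0 Hw HD m) as [W _]. pose proof (pick_sub f _ W) as S. simpl.
  unfold sub in S. lra.
Qed.

Lemma INR_lt_pow2 n : INR n < 2 ^ n.
Proof.
induction n. simpl. lra. rewrite S_INR. simpl. assert (1 <= 2 ^ n) by (apply pow_R1_Rle; lra). lra.
Qed.

Lemma pow4 k : 4 ^ k = 2 ^ k * 2 ^ k.
Proof. rewrite <- Rpow_mult_distr. f_equal. Qed.

Lemma small_pow S d : 0 <= S -> 0 < d -> exists k, S / 2 ^ k < d.
Proof.
intros HS Hd. destruct (archimed (S / d)) as [H1 _].
assert (0 <= up (S / d))%Z. { apply le_IZR. assert (0 <= S / d) by (apply Rdiv_le_0_compat; lra). lra. }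
exists (Z.to_nat (up (S / d))).
pose proof (INR_lt_pow2 (Z.to_nat (up (S / d)))) as P.
rewrite INR_IZR_INZ, Z2Nat.id in P by auto.
assert (0 < 2 ^ Z.to_nat (up (S / d))) by (apply pow_lt; lra).
apply Rmult_lt_reg_r with (2 ^ Z.to_nat (up (S / d))); auto.
unfold Rdiv. rewrite Rmult_assoc, Rinv_l by lra. rewrite Rmult_1_r.
assert (S / d * d = S) by (field; lra).
assert (S / d < 2 ^ Z.to_nat (up (S / d))) by lra.
nra.
Qed.

Lemma goursat_R f r0 : wf r0 -> DiffR f r0 -> IR f r0 = 0%C.
Proof.
intros Hw HD.
destruct (Req_dec (Cmod (IR f r0)) 0) as [E|Hc]. apply Cmod_eq_0; auto.
assert (Hc0 : 0 < Cmod (IR f r0)) by (pose proof (Cmod_ge_0 (IR f r0)); lra).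
set (c := Cmod (IR f r0)) in *.
set (Ex0 := fun x => exists k, x = rx0 (rs f r0 k)).
set (Ey0 := fun y => exists k, y = ry0 (rs f r0 k)).
assert (Hmx : forall j k, rx0 (rs f r0 j) <= rx1 (rs f r0 k)).
{ intros j k. destruct (rs_mono f r0 Hw HD j (max j k) (Nat.le_max_l _ _)).
  destruct (rs_mono f r0 Hw HD k (max j k) (Nat.le_max_r _ _)) as [_ [? _]].
  destruct (rs_props f r0 Hw HD (max j k)) as [[W1 _] _]. lra. }
assert (Hmy : forall j k, ry0 (rs f r0 j) <= ry1 (rs f r0 k)).
{ intros j k. destruct (rs_mono f r0 Hw HD j (max j k) (Nat.le_max_l _ _)) as [_ [_ [? _]]].
  destruct (rs_mono f r0 Hw HD k (max j k) (Nat.le_max_r _ _)) as [_ [_ [_ ?]]].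
  destruct (rs_props f r0 Hw HD (max j k)) as [[_ W1] _]. lra. }
destruct (completeness Ex0) as [px [Hpx1 Hpx2]].
{ exists (rx1 r0). intros x [k ->]. apply (Hmx k O). }
{ exists (rx0 r0). exists O. reflexivity. }
destruct (completeness Ey0) as [py [Hpy1 Hpy2]].
{ exists (ry1 r0). intros x [k ->]. apply (Hmy k O). }
{ exists (ry0 r0). exists O. reflexivity. }
assert (Px : forall k, rx0 (rs f r0 k) <= px <= rx1 (rs f r0 k)).
{ intros k. split. apply Hpx1. exists k; auto. apply Hpx2. intros x [j ->]. apply Hmx. }
assert (Py : forall k, ry0 (rs f r0 k) <= py <= ry1 (rs f r0 k)).
{ intros k. split. apply Hpy1. exists k; auto. apply Hpy2. intros x [j ->]. apply Hmy. }
destruct (HD px py (Px O) (Py O)) as [d Hd].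
set (S := (rx1 r0 - rx0 r0) + (ry1 r0 - ry0 r0)).
assert (HS : 0 <= S) by (unfold S; destruct Hw; lra).
set (eta := c / (4 * (S * S + 1))).
assert (Heta : 0 < eta) by (unfold eta; apply Rdiv_lt_0_compat; nra).
destruct (deriv_eps f (px, py) d Hd eta Heta) as [del [Hdel Hloc]].
destruct (small_pow S del HS Hdel) as [k Hk].
destruct (rs_props f r0 Hw HD k) as [[Wx Wy] [Dk [Xk [Yk Ck]]]].
set (r := rs f r0 k) in *.
assert (Hsz : (rx1 r - rx0 r) + (ry1 r - ry0 r) = S / 2 ^ k).
{ rewrite Xk, Yk. unfold S. field. apply pow_nonzero; lra. }
assert (HI := I_local f (rx0 r) (rx1 r) (ry0 r) (ry1 r) (px, py) d eta Wx Wy Dk (Px k) (Py k)).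
assert (HI' : Cmod (IR f r) <= 2 * (S / 2 ^ k) * (eta * (S / 2 ^ k))).
{ rewrite <- Hsz. apply HI; [|lra].
  intros w Hwx Hwy. apply Hloc. eapply Rle_lt_trans. apply Cmod_le_abs. simpl.
  destruct (Px k), (Py k). destruct w as [wx wy]. simpl in *. unfold r in *.
  assert (AB : forall a b lo hi, lo <= a <= hi -> lo <= b <= hi -> Rabs (a - b) <= hi - lo)
    by (intros; unfold Rabs; destruct Rcase_abs; lra).
  pose proof (AB wx px (rx0 (rs f r0 k)) (rx1 (rs f r0 k)) ltac:(lra) ltac:(lra)).
  pose proof (AB wy py (ry0 (rs f r0 k)) (ry1 (rs f r0 k)) ltac:(lra) ltac:(lra)).
  unfold Rminus in *. lra. }
assert (P2 : 0 < 2 ^ k) by (apply pow_lt; lra).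
assert (c <= 2 * S * S * eta).
{ eapply Rle_trans. exact Ck. rewrite pow4.
  replace (2 * S * S * eta) with (2 * (S / 2 ^ k) * (eta * (S / 2 ^ k)) * (2 ^ k * 2 ^ k)) by (field; lra).
  apply Rmult_le_compat_r. nra. exact HI'. }
assert (2 * S * S * eta < c).
{ unfold eta. replace (2 * S * S * (c / (4 * (S * S + 1)))) with (c * ((S * S) / (2 * (S * S + 1)))) by (field; nra).
  assert (S * S / (2 * (S * S + 1)) < 1). { apply Rmult_lt_reg_r with (2 * (S * S + 1)). nra. unfold Rdiv. rewrite Rmult_assoc, Rinv_l by nra. nra. }
  assert (0 <= S * S / (2 * (S * S + 1))) by (apply Rdiv_le_0_compat; nra). nra. }
lra.
Qed.

Lemma goursat f x0 x1 y0 y1 : x0 <= x1 -> y0 <= y1 -> DiffOn f x0 x1 y0 y1 -> I f x0 x1 y0 y1 = 0%C.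
Proof. intros Hx Hy HD. apply (goursat_R f (mkR x0 x1 y0 y1)). split; simpl; auto. exact HD. Qed.

Lemma Cmod_sub_ge (a b : C) : Cmod a - Cmod b <= Cmod (a - b).
Proof. pose proof (Cmod_triangle (a - b) b). replace (a - b + b)%C with a in H by ring. lra. Qed.

Lemma dinv z w0 : w0 <> z -> cderiv (fun w => / (w - z))%C w0 (- (/ (w0 - z) * / (w0 - z)))%C.
Proof.
intros Hne. apply eps_deriv. intros eta Heta.
set (u0 := (w0 - z)%C).
assert (Hu0 : u0 <> 0%C). { unfold u0. intros E. apply Hne. replace w0 with (w0 - z + z)%C by ring. rewrite E. ring. }
set (m := Cmod u0).
assert (Hm : 0 < m). { unfold m. pose proof (Cmod_ge_0 u0). destruct (Req_dec (Cmod u0) 0). apply Cmod_eq_0 in H0. contradiction. lra. }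
exists (Rmin (m / 2) (eta * m * m * m / 2)). split.
{ apply Rmin_glb_lt. lra. assert (0 < eta * m * m * m) by (repeat apply Rmult_lt_0_compat; auto). lra. }
intros w Hw. pose proof (Rmin_l (m / 2) (eta * m * m * m / 2)). pose proof (Rmin_r (m / 2) (eta * m * m * m / 2)).
set (e := Cmod (w - w0)) in *.
set (u := (w - z)%C).
assert (Hu : m / 2 < Cmod u).
{ pose proof (Cmod_sub_ge u0 (w0 - w)). replace (u0 - (w0 - w))%C with u in H1 by (unfold u, u0; ring).
  assert (Cmod (w0 - w) = e). { unfold e. rewrite <- Cmod_opp. f_equal. ring. }
  fold m in H1. lra. }
assert (Hu' : u <> 0%C). { intros E. rewrite E, Cmod_0 in Hu. lra. }
replace (/ u - / u0 - - (/ u0 * / u0) * (w - w0))%C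
  with ((w - w0) * (w - w0) * / u * / u0 * / u0)%C.
2: { replace (w - w0)%C with (u - u0)%C by (unfold u, u0; ring). field. split; auto. }
rewrite !Cmod_mult, !Cmod_inv by auto. fold e m.
assert (He : 0 <= e) by apply Cmod_ge_0.
assert (Hiu : / Cmod u <= 2 / m). { apply Rle_trans with (/ (m / 2)). apply Rinv_le_contravar; lra. right; field; lra. }
assert (Hiu0 : 0 <= / Cmod u) by (apply Rlt_le, Rinv_0_lt_compat; lra).
apply Rle_trans with (e * e * (2 / m) * / m * / m).
{ repeat apply Rmult_le_compat_r; try (apply Rlt_le, Rinv_0_lt_compat; lra). apply Rmult_le_compat_l; nra. }
replace (e * e * (2 / m) * / m * / m) with (e * (e * 2 / (m * m * m))) by (field; lra).
rewrite (Rmult_comm eta e). apply Rmult_le_compat_l; auto.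
apply Rmult_le_reg_r with (m * m * m). repeat apply Rmult_lt_0_compat; auto.
unfold Rdiv. rewrite Rmult_assoc, Rinv_l by (apply Rgt_not_eq; repeat apply Rmult_lt_0_compat; auto). lra.
Qed.

Definition gq (f : C -> C) (z : C) := fun w => ((f w - f z) * (/ (w - z) * / (w - z)))%C.
Definition hq (z : C) := fun w => (/ (w - z))%C.

Definition aderiv (f : C -> C) (z l : C) : Prop :=
  is_derive (K := C_AbsRing) (V := AbsRing_NormedModule C_AbsRing) f z l.

Lemma aderiv_cderiv f p l : aderiv f p l -> cderiv f p l.
Proof.
intros [_ Hd]. apply eps_deriv. intros eta Heta.
destruct (Hd p (fun P H => H) (mkposreal _ Heta)) as [e He].
exists e; split; [apply cond_pos|].
intros w Hw. specialize (He w Hw). simpl in He.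
unfold norm, minus, plus, opp, scal in He; simpl in He. unfold abs, mult in He; simpl in He.
change (Cmod (f w + - f p + - ((w + - p) * l))%C <= eta * Cmod (w + - p)%C) in He.
replace (f w + - f p + - ((w + - p) * l))%C with (f w - f p - l * (w - p))%C in He by ring. exact He.
Qed.

Lemma cderiv_aderiv f p l : cderiv f p l -> aderiv f p l.
Proof.
intros H. pose proof (deriv_eps f p l H) as H'. split. apply is_linear_scal_l.
intros x Hx. apply (@is_filter_lim_locally_unique C_AbsRing (AbsRing_NormedModule C_AbsRing)) in Hx. subst x.
intros eps. destruct (H' eps (cond_pos eps)) as [del [Hdel Hw]].
exists (mkposreal _ Hdel). intros w Hb. specialize (Hw w Hb).
unfold norm, minus, plus, opp, scal; simpl. unfold abs, mult; simpl.
change (Cmod (f w + - f p + - ((w + - p) * l))%C <= eps * Cmod (w + - p)%C).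
replace (f w + - f p + - ((w + - p) * l))%C with (f w - f p - l * (w - p))%C by ring. exact Hw.
Qed.

Lemma gq_diff f z w : cdiff f w -> w <> z -> cdiff (gq f z) w.
Proof.
intros [l Hl] Hne. unfold gq. eexists. apply aderiv_cderiv.
apply (is_derive_mult (K:=C_AbsRing) (fun w => (f w - f z)%C) (fun w => (/ (w - z) * / (w - z))%C)).
- apply (is_derive_minus (K:=C_AbsRing) (V:=AbsRing_NormedModule C_AbsRing) f (fun _ => f z)). apply cderiv_aderiv; exact Hl. apply is_derive_const.
- apply (is_derive_mult (K:=C_AbsRing) (fun w => (/ (w - z))%C) (fun w => (/ (w - z))%C)).
  apply cderiv_aderiv, dinv; auto. apply cderiv_aderiv, dinv; auto. intros; apply Cmult_comm.
- intros; apply Cmult_comm.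
Qed.

Lemma hq_diff z w : w <> z -> cdiff (hq z) w.
Proof. intros H. eexists. apply dinv. auto. Qed.

Lemma pt_ne_x x y zx zy : x <> zx -> ((x, y) : C) <> ((zx, zy) : C).
Proof. intros H E. injection E. auto. Qed.
Lemma pt_ne_y x y zx zy : y <> zy -> ((x, y) : C) <> ((zx, zy) : C).
Proof. intros H E. injection E. auto. Qed.

Lemma I_shrink F zx zy a d : 0 < d < a ->
  (forall x y, zx - a <= x <= zx + a -> zy - a <= y <= zy + a -> ((x, y) : C) <> ((zx, zy) : C) -> cdiff F (x, y)) ->
  I F (zx - a) (zx + a) (zy - a) (zy + a) = I F (zx - d) (zx + d) (zy - d) (zy + d).
Proof.
intros Hd HF.
assert (EH : forall y a0 b0, y <> zy -> zy - a <= y <= zy + a -> zx - a <= a0 -> a0 <= b0 -> b0 <= zx + a -> Ex (fun x => F (x, y)) a0 b0).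
{ intros y a0 b0 Hy Hy' H1 H2 H3. apply Ex_hor_gen; auto. intros x Hx. apply HF; try lra. apply pt_ne_y; auto. }
assert (EV : forall x a0 b0, x <> zx -> zx - a <= x <= zx + a -> zy - a <= a0 -> a0 <= b0 -> b0 <= zy + a -> Ex (fun y => F (x, y)) a0 b0).
{ intros x a0 b0 Hx Hx' H1 H2 H3. apply Ex_ver_gen; auto. intros y Hy. apply HF; try lra. apply pt_ne_x; auto. }
rewrite (I_splitx F (zx - a) (zx - d) (zx + a)); try (apply EH; lra).
rewrite (I_splitx F (zx - d) (zx + d) (zx + a)); try (apply EH; lra).
rewrite (I_splity F (zx - d) (zx + d) (zy - a) (zy - d) (zy + a)); try (apply EV; lra).
rewrite (I_splity F (zx - d) (zx + d) (zy - d) (zy + d) (zy + a)); try (apply EV; lra).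
rewrite (goursat F (zx - a) (zx - d) (zy - a) (zy + a)); try lra.
2: { intros x y Hx Hy. apply HF; try lra. apply pt_ne_x; lra. }
rewrite (goursat F (zx + d) (zx + a) (zy - a) (zy + a)); try lra.
2: { intros x y Hx Hy. apply HF; try lra. apply pt_ne_x; lra. }
rewrite (goursat F (zx - d) (zx + d) (zy - a) (zy - d)); try lra.
2: { intros x y Hx Hy. apply HF; try lra. apply pt_ne_y; lra. }
rewrite (goursat F (zx - d) (zx + d) (zy + d) (zy + a)); try lra.
2: { intros x y Hx Hy. apply HF; try lra. apply pt_ne_y; lra. }
ring.
Qed.

Lemma frac_lb t d : 0 < d -> t * t <= d * d -> / (2 * d) <= d / (t ^ 2 + d ^ 2).
Proof.
intros Hd Ht. assert (0 < t ^ 2 + d ^ 2) by nra.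
apply Rmult_le_reg_r with (2 * d * (t ^ 2 + d ^ 2)). nra.
replace (/ (2 * d) * (2 * d * (t ^ 2 + d ^ 2))) with (t ^ 2 + d ^ 2) by (field; lra).
replace (d / (t ^ 2 + d ^ 2) * (2 * d * (t ^ 2 + d ^ 2))) with (2 * d * d) by (field; lra).
nra.
Qed.

Lemma int_lb (g : R -> R) a b c : a <= b -> ex_RInt g a b -> (forall x, a < x < b -> c <= g x) -> (b - a) * c <= RInt g a b.
Proof.
intros Hab Hex H. eapply Rle_trans; [|apply (RInt_le (fun _ => c)); auto].
rewrite RInt_const. unfold scal; simpl; unfold mult; simpl. lra.
apply ex_RInt_const.
Qed.

Lemma RInt_ropp g a b : ex_RInt g a b -> RInt (fun t => - g t) a b = - RInt g a b.
Proof. intros H. apply (@is_RInt_unique R_CompleteNormedModule). apply (is_RInt_opp g a b). apply (@RInt_correct R_CompleteNormedModule). exact H. Qed.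

Lemma ex_RInt_ropp g a b : ex_RInt g a b -> ex_RInt (fun t => - g t) a b.
Proof. intros H. eexists. apply (is_RInt_opp g a b). apply (@RInt_correct R_CompleteNormedModule). exact H. Qed.

Lemma hq_im zx zy d : 0 < d -> 4 <= snd (I (hq (zx, zy)) (zx - d) (zx + d) (zy - d) (zy + d)).
Proof.
intros Hd.
assert (EH : forall y, y <> zy -> Ex (fun x => hq (zx, zy) (x, y)) (zx - d) (zx + d)).
{ intros y Hy. apply Ex_hor_gen. lra. intros x _. apply hq_diff. apply pt_ne_y; auto. }
assert (EV : forall x, x <> zx -> Ex (fun y => hq (zx, zy) (x, y)) (zy - d) (zy + d)).
{ intros x Hx. apply Ex_ver_gen. lra. intros y _. apply hq_diff. apply pt_ne_x; auto. }
assert (Hsum : snd (I (hq (zx, zy)) (zx - d) (zx + d) (zy - d) (zy + d)) =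
   snd (hor (hq (zx, zy)) (zy - d) (zx - d) (zx + d)) + fst (ver (hq (zx, zy)) (zx + d) (zy - d) (zy + d))
   - snd (hor (hq (zx, zy)) (zy + d) (zx - d) (zx + d)) - fst (ver (hq (zx, zy)) (zx - d) (zy - d) (zy + d))).
{ unfold I, Ci. simpl. ring. }
rewrite Hsum. unfold hor, ver.
rewrite Int_snd by (apply EH; lra). rewrite Int_snd by (apply EH; lra).
rewrite Int_fst by (apply EV; lra). rewrite Int_fst by (apply EV; lra).
assert (B1 : 1 <= RInt (fun t => snd (hq (zx, zy) (t, zy - d))) (zx - d) (zx + d)).
{ replace 1 with ((zx + d - (zx - d)) * / (2 * d)) by (field; lra).
  apply int_lb. lra. apply Ex_snd, EH; lra.
  intros x Hx. unfold hq; simpl.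
  match goal with |- _ <= ?e => replace e with (d / ((x - zx) ^ 2 + d ^ 2)) by (field; nra) end.
  apply frac_lb; nra. }
assert (B2 : 1 <= RInt (fun t => fst (hq (zx, zy) (zx + d, t))) (zy - d) (zy + d)).
{ replace 1 with ((zy + d - (zy - d)) * / (2 * d)) by (field; lra).
  apply int_lb. lra. apply Ex_fst, EV; lra.
  intros y Hy. unfold hq; simpl.
  match goal with |- _ <= ?e => replace e with (d / ((y - zy) ^ 2 + d ^ 2)) by (field; nra) end.
  apply frac_lb; nra. }
assert (B3 : 1 <= - RInt (fun t => snd (hq (zx, zy) (t, zy + d))) (zx - d) (zx + d)).
{ rewrite <- RInt_ropp by (apply Ex_snd, EH; lra).
  replace 1 with ((zx + d - (zx - d)) * / (2 * d)) by (field; lra).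
  apply int_lb. lra. apply ex_RInt_ropp, Ex_snd, EH; lra.
  intros x Hx. unfold hq; simpl.
  match goal with |- _ <= ?e => replace e with (d / ((x - zx) ^ 2 + d ^ 2)) by (field; nra) end.
  apply frac_lb; nra. }
assert (B4 : 1 <= - RInt (fun t => fst (hq (zx, zy) (zx - d, t))) (zy - d) (zy + d)).
{ rewrite <- RInt_ropp by (apply Ex_fst, EV; lra).
  replace 1 with ((zy + d - (zy - d)) * / (2 * d)) by (field; lra).
  apply int_lb. lra. apply ex_RInt_ropp, Ex_fst, EV; lra.
  intros y Hy. unfold hq; simpl.
  match goal with |- _ <= ?e => replace e with (d / ((y - zy) ^ 2 + d ^ 2)) by (field; nra) end.
  apply frac_lb; nra. }
lra.
Qed.

Lemma I_bound2 f x0 x1 y0 y1 M : x0 <= x1 -> y0 <= y1 ->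
  Ex (fun x => f (x, y0)) x0 x1 -> Ex (fun x => f (x, y1)) x0 x1 ->
  Ex (fun y => f (x0, y)) y0 y1 -> Ex (fun y => f (x1, y)) y0 y1 ->
  (forall x, x0 <= x <= x1 -> Cmod (f (x, y0)) <= M /\ Cmod (f (x, y1)) <= M) ->
  (forall y, y0 <= y <= y1 -> Cmod (f (x0, y)) <= M /\ Cmod (f (x1, y)) <= M) ->
  Cmod (I f x0 x1 y0 y1) <= 2 * ((x1 - x0) + (y1 - y0)) * M.
Proof.
intros Hx Hy E1 E2 E3 E4 HM1 HM2. unfold I.
assert (B1 : Cmod (hor f y0 x0 x1) <= (x1 - x0) * M). { apply Int_bound; auto. intros; apply HM1; lra. }
assert (B2 : Cmod (hor f y1 x0 x1) <= (x1 - x0) * M). { apply Int_bound; auto. intros; apply HM1; lra. }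
assert (B3 : Cmod (ver f x0 y0 y1) <= (y1 - y0) * M). { apply Int_bound; auto. intros; apply HM2; lra. }
assert (B4 : Cmod (ver f x1 y0 y1) <= (y1 - y0) * M). { apply Int_bound; auto. intros; apply HM2; lra. }
set (a := hor f y0 x0 x1) in *. set (b := ver f x1 y0 y1) in *. set (c := hor f y1 x0 x1) in *. set (d := ver f x0 y0 y1) in *.
replace (a + Ci * b - c - Ci * d)%C with (a + Ci * b + (- c) + (- (Ci * d)))%C by ring.
eapply Rle_trans. apply Cmod_triangle. eapply Rle_trans. apply Rplus_le_compat_r. apply Cmod_triangle.
eapply Rle_trans. apply Rplus_le_compat_r. apply Rplus_le_compat_r. apply Cmod_triangle.
rewrite !Cmod_opp, !Cmod_Ci. lra.
Qed.

Lemma I_scal k f x0 x1 y0 y1 :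
  Ex (fun x => f (x, y0)) x0 x1 -> Ex (fun x => f (x, y1)) x0 x1 ->
  Ex (fun y => f (x0, y)) y0 y1 -> Ex (fun y => f (x1, y)) y0 y1 ->
  I (fun w => k * f w)%C x0 x1 y0 y1 = (k * I f x0 x1 y0 y1)%C.
Proof.
intros. unfold I, hor, ver. cbv beta.
rewrite (Int_Cmult (fun x => f (x, y0))) by assumption.
rewrite (Int_Cmult (fun x => f (x, y1))) by assumption.
rewrite (Int_Cmult (fun y => f (x0, y))) by assumption.
rewrite (Int_Cmult (fun y => f (x1, y))) by assumption.
ring.
Qed.

Lemma cm_lb x y zx zy d : Rabs (x - zx) = d \/ Rabs (y - zy) = d -> d <= Cmod (((x, y) : C) - (zx, zy))%C.
Proof.
intros [H|H].
- eapply Rle_trans; [|apply Cmod_ge_fst]. simpl. rewrite <- H. right. reflexivity.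
- eapply Rle_trans; [|apply Cmod_ge_snd]. simpl. rewrite <- H. right. reflexivity.
Qed.

Lemma cm_ub x y zx zy d : Rabs (x - zx) <= d -> Rabs (y - zy) <= d -> Cmod (((x, y) : C) - (zx, zy))%C <= 2 * d.
Proof.
intros H1 H2. eapply Rle_trans. apply Cmod_le_abs. simpl. unfold Rminus in *. lra.
Qed.

Lemma abs_le_d x zx d : zx - d <= x <= zx + d -> Rabs (x - zx) <= d.
Proof. intros H. unfold Rabs; destruct Rcase_abs; lra. Qed.
Lemma abs_eq_d1 zx d : 0 <= d -> Rabs (zx - d - zx) = d.
Proof. intros H. replace (zx - d - zx) with (- d) by ring. rewrite Rabs_Ropp, Rabs_pos_eq; lra. Qed.
Lemma abs_eq_d2 zx d : 0 <= d -> Rabs (zx + d - zx) = d.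
Proof. intros H. replace (zx + d - zx) with d by ring. rewrite Rabs_pos_eq; lra. Qed.

Lemma gq_bound f z w B a : 0 < a -> a <= Cmod (w - z) -> Cmod (f w) <= B -> Cmod (f z) <= B ->
  Cmod (gq f z w) <= 2 * B / (a * a).
Proof.
intros Ha Hw H1 H2. unfold gq.
assert (Hne : (w - z)%C <> 0%C). { intros E. rewrite E, Cmod_0 in Hw. lra. }
rewrite !Cmod_mult, !Cmod_inv by auto.
assert (Cmod (f w - f z) <= 2 * B). { unfold Cminus. eapply Rle_trans. apply Cmod_triangle. rewrite Cmod_opp. lra. }
assert (/ Cmod (w - z) <= / a) by (apply Rinv_le_contravar; lra).
assert (0 <= / Cmod (w - z)) by (apply Rlt_le, Rinv_0_lt_compat; lra).
pose proof (Cmod_ge_0 (f w - f z)).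
replace (2 * B / (a * a)) with (2 * B * (/ a * / a)) by (field; lra).
apply Rmult_le_compat; auto. apply Rmult_le_pos; auto. apply Rmult_le_compat; auto.
Qed.

Lemma k_bound f z l w d eta : 0 < d -> d <= Cmod (w - z) ->
  Cmod (f w - f z - l * (w - z)) <= eta * Cmod (w - z) -> 0 < eta ->
  Cmod (gq f z w - l * hq z w) <= eta / d.
Proof.
intros Hd Hw H Heta. unfold gq, hq.
assert (Hne : (w - z)%C <> 0%C). { intros E. rewrite E, Cmod_0 in Hw. lra. }
replace ((f w - f z) * (/ (w - z) * / (w - z)) - l * / (w - z))%C with ((f w - f z - l * (w - z)) * / (w - z) * / (w - z))%C by (field; auto).
rewrite !Cmod_mult, !Cmod_inv by auto.
set (m := Cmod (w - z)) in *.
apply Rle_trans with (eta * m * / m * / m).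
{ apply Rmult_le_compat_r. apply Rlt_le, Rinv_0_lt_compat; lra. apply Rmult_le_compat_r. apply Rlt_le, Rinv_0_lt_compat; lra. auto. }
replace (eta * m * / m * / m) with (eta / m) by (field; lra).
unfold Rdiv. apply Rmult_le_compat_l. lra. apply Rinv_le_contravar; lra.
Qed.

Lemma sideEx F zx zy a d : 0 < d <= a ->
  (forall x y, zx - a <= x <= zx + a -> zy - a <= y <= zy + a -> ((x, y) : C) <> ((zx, zy) : C) -> cdiff F (x, y)) ->
  Ex (fun x => F (x, zy - d)) (zx - d) (zx + d) /\ Ex (fun x => F (x, zy + d)) (zx - d) (zx + d) /\
  Ex (fun y => F (zx - d, y)) (zy - d) (zy + d) /\ Ex (fun y => F (zx + d, y)) (zy - d) (zy + d).
Proof.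
intros Hd HF. repeat split.
- apply Ex_hor_gen. lra. intros x Hx. apply HF; try lra. apply pt_ne_y; lra.
- apply Ex_hor_gen. lra. intros x Hx. apply HF; try lra. apply pt_ne_y; lra.
- apply Ex_ver_gen. lra. intros y Hy. apply HF; try lra. apply pt_ne_x; lra.
- apply Ex_ver_gen. lra. intros y Hy. apply HF; try lra. apply pt_ne_x; lra.
Qed.

Lemma cauchy_est f zx zy a B l : 0 < a -> DiffOn f (zx - a) (zx + a) (zy - a) (zy + a) ->
  (forall x y, zx - a <= x <= zx + a -> zy - a <= y <= zy + a -> Cmod (f (x, y)) <= B) ->
  cderiv f (zx, zy) l -> Cmod l <= 4 * B / a.
Proof.
intros Ha HD HB Hl.
assert (HB0 : Cmod (f (zx, zy)) <= B) by (apply HB; lra).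
assert (HFg : forall x y, zx - a <= x <= zx + a -> zy - a <= y <= zy + a -> ((x, y) : C) <> ((zx, zy) : C) -> cdiff (gq f (zx, zy)) (x, y)).
{ intros x y Hx Hy Hne. apply gq_diff; auto. }
assert (HFh : forall x y, zx - a <= x <= zx + a -> zy - a <= y <= zy + a -> ((x, y) : C) <> ((zx, zy) : C) -> cdiff (hq (zx, zy)) (x, y)).
{ intros x y Hx Hy Hne. apply hq_diff; auto. }
assert (B16 : Cmod (I (gq f (zx, zy)) (zx - a) (zx + a) (zy - a) (zy + a)) <= 16 * B / a).
{ destruct (sideEx _ zx zy a a ltac:(lra) HFg) as [E1 [E2 [E3 E4]]].
  eapply Rle_trans. apply (I_bound2 _ _ _ _ _ (2 * B / (a * a))); try lra; auto.
  - intros x Hx. split; apply gq_bound; auto; try (apply HB; lra); apply cm_lb; right.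
    apply abs_eq_d1; lra. apply abs_eq_d2; lra.
  - intros y Hy. split; apply gq_bound; auto; try (apply HB; lra); apply cm_lb; left.
    apply abs_eq_d1; lra. apply abs_eq_d2; lra.
  - right. field. lra. }
assert (Main : forall eta, 0 < eta -> 4 * Cmod l <= 16 * B / a + 8 * eta).
{ intros eta Heta.
  destruct (deriv_eps f (zx, zy) l Hl eta Heta) as [del [Hdel Hloc]].
  set (d := Rmin (a / 2) (del / 4)).
  assert (Hd1 : 0 < d) by (apply Rmin_glb_lt; lra).
  assert (Hd2 : d <= a / 2) by apply Rmin_l. assert (Hd3 : d <= del / 4) by apply Rmin_r.
  rewrite (I_shrink _ zx zy a d) in B16 by (auto; lra).
  destruct (sideEx _ zx zy a d ltac:(lra) HFg) as [G1 [G2 [G3 G4]]].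
  destruct (sideEx _ zx zy a d ltac:(lra) HFh) as [H1 [H2 [H3 H4]]].
  assert (Hk : I (fun w => gq f (zx, zy) w - l * hq (zx, zy) w)%C (zx - d) (zx + d) (zy - d) (zy + d)
             = (I (gq f (zx, zy)) (zx - d) (zx + d) (zy - d) (zy + d) - l * I (hq (zx, zy)) (zx - d) (zx + d) (zy - d) (zy + d))%C).
  { rewrite (I_minus (gq f (zx, zy)) (fun w => l * hq (zx, zy) w)%C); auto.
    rewrite I_scal; auto.
    apply (Ex_Cmult (fun x => hq (zx, zy) (x, zy - d))); auto.
    apply (Ex_Cmult (fun x => hq (zx, zy) (x, zy + d))); auto.
    apply (Ex_Cmult (fun y => hq (zx, zy) (zx - d, y))); auto.
    apply (Ex_Cmult (fun y => hq (zx, zy) (zx + d, y))); auto. }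
  assert (B8 : Cmod (I (fun w => gq f (zx, zy) w - l * hq (zx, zy) w)%C (zx - d) (zx + d) (zy - d) (zy + d)) <= 8 * eta).
  { eapply Rle_trans. apply (I_bound2 _ _ _ _ _ (eta / d)); try lra.
    - cbv beta. apply (Ex_minus (fun x => gq f (zx, zy) (x, zy - d)) (fun x => (l * hq (zx, zy) (x, (zy - d)%R))%C)); auto.
      apply (Ex_Cmult (fun x => hq (zx, zy) (x, zy - d))); auto.
    - cbv beta. apply (Ex_minus (fun x => gq f (zx, zy) (x, zy + d)) (fun x => (l * hq (zx, zy) (x, (zy + d)%R))%C)); auto.
      apply (Ex_Cmult (fun x => hq (zx, zy) (x, zy + d))); auto.
    - cbv beta. apply (Ex_minus (fun y => gq f (zx, zy) (zx - d, y)) (fun y => (l * hq (zx, zy) ((zx - d)%R, y))%C)); auto.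
      apply (Ex_Cmult (fun y => hq (zx, zy) (zx - d, y))); auto.
    - cbv beta. apply (Ex_minus (fun y => gq f (zx, zy) (zx + d, y)) (fun y => (l * hq (zx, zy) ((zx + d)%R, y))%C)); auto.
      apply (Ex_Cmult (fun y => hq (zx, zy) (zx + d, y))); auto.
    - intros x Hx. split; apply k_bound; auto.
      + apply cm_lb. right. apply abs_eq_d1; lra.
      + apply Hloc. eapply Rle_lt_trans. apply (cm_ub _ _ _ _ d). apply abs_le_d; lra. rewrite abs_eq_d1; lra. lra.
      + apply cm_lb. right. apply abs_eq_d2; lra.
      + apply Hloc. eapply Rle_lt_trans. apply (cm_ub _ _ _ _ d). apply abs_le_d; lra. rewrite abs_eq_d2; lra. lra.
    - intros y Hy. split; apply k_bound; auto.
      + apply cm_lb. left. apply abs_eq_d1; lra.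
      + apply Hloc. eapply Rle_lt_trans. apply (cm_ub _ _ _ _ d). rewrite abs_eq_d1; lra. apply abs_le_d; lra. lra.
      + apply cm_lb. left. apply abs_eq_d2; lra.
      + apply Hloc. eapply Rle_lt_trans. apply (cm_ub _ _ _ _ d). rewrite abs_eq_d2; lra. apply abs_le_d; lra. lra.
    - right. field. lra. }
  rewrite Hk in B8.
  pose proof (hq_im zx zy d Hd1) as Him.
  set (Ig := I (gq f (zx, zy)) (zx - d) (zx + d) (zy - d) (zy + d)) in *.
  set (Ih := I (hq (zx, zy)) (zx - d) (zx + d) (zy - d) (zy + d)) in *.
  assert (Cmod (l * Ih) <= Cmod Ig + Cmod (Ig - l * Ih)).
  { assert (E : (l * Ih)%C = (Ig + - (Ig - l * Ih))%C) by ring. rewrite E at 1. eapply Rle_trans. apply Cmod_triangle. rewrite Cmod_opp. lra. }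
  rewrite Cmod_mult in H.
  assert (4 <= Cmod Ih). { eapply Rle_trans. exact Him. eapply Rle_trans. apply Rle_abs. apply Cmod_ge_snd. }
  pose proof (Cmod_ge_0 l). nra. }
destruct (Rle_dec (Cmod l) (4 * B / a)) as [H|H]; auto.
exfalso. set (eta := (Cmod l - 4 * B / a) / 4).
assert (0 < eta) by (unfold eta; lra).
specialize (Main eta H0).
assert (16 * B / a = 4 * (4 * B / a)) by (field; lra).
unfold eta in Main. lra.
Qed.

Lemma lub_fin (E : R -> Prop) x0 K : E x0 -> (forall x, E x -> x <= K) ->
  (forall x, E x -> x <= real (Lub_Rbar E)) /\ real (Lub_Rbar E) <= K.
Proof.
intros H0 HK. destruct (Lub_Rbar_correct E) as [Hub Hlub].
assert (HK' : Rbar_le (Lub_Rbar E) (Finite K)).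
{ apply (Hlub (Finite K)). unfold is_ub_Rbar. intros x Hx. simpl. apply HK; auto. }
revert Hub HK'. destruct (Lub_Rbar E) as [l| |]; intros Hub HK'.
- simpl. split. intros x Hx. apply (Hub x Hx). exact HK'.
- simpl in HK'. contradiction.
- pose proof (Hub x0 H0) as H. simpl in H. contradiction.
Qed.

Lemma inD0 : inD 0%C.
Proof. unfold inD. rewrite Cmod_0. lra. Qed.

Lemma holo_zero : holo (fun _ => 0%C).
Proof. intros z _. exists zero. apply (is_derive_const (K:=C_AbsRing) (V:=C_NormedModule)). Qed.

Lemma cdiff_holo f z : holo f -> inD z -> exists l, cderiv f z l.
Proof. intros H Hz. destruct (H z Hz) as [l Hl]. exists l. exact Hl. Qed.

Lemma Cmod_RtoC_pos (k : R) : 0 <= k -> Cmod (RtoC k) = k.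
Proof. intros H. rewrite Cmod_R. apply Rabs_pos_eq; auto. Qed.

Section Lin.
Variable T : (C -> C) -> (C -> C).
Hypothesis HL : linear_HD T.

Lemma T_zero z : inD z -> T (fun _ => 0%C) z = 0%C.
Proof.
intros Hz. destruct HL as [_ HL2].
pose proof (HL2 1%C (fun _ => 0%C) (fun _ => 0%C) holo_zero holo_zero z Hz) as H.
assert (E : flin 1 (fun _ => 0%C) (fun _ => 0%C) = (fun _ => 0%C)).
{ apply functional_extensionality. intros w. unfold flin. ring. }
rewrite E in H. unfold flin in H.
destruct (T (fun _ => 0%C) z) as [a1 a2].
pose proof (f_equal fst H) as H1. pose proof (f_equal snd H) as H2. simpl in H1, H2.
apply injective_projections; simpl; lra.
Qed.

Lemma T_scal k g z : holo g -> inD z -> T (fun w => k * g w)%C z = (k * T g z)%C.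
Proof.
intros Hg Hz. destruct HL as [_ HL2].
pose proof (HL2 k g (fun _ => 0%C) Hg holo_zero z Hz) as H.
assert (E : flin k g (fun _ => 0%C) = (fun w => k * g w)%C).
{ apply functional_extensionality. intros w. unfold flin. ring. }
rewrite E in H. rewrite H. unfold flin. rewrite T_zero by auto. ring.
Qed.

Lemma T_minus f g z : holo f -> holo g -> inD z -> T (fminus f g) z = (T f z - T g z)%C.
Proof.
intros Hf Hg Hz. destruct HL as [_ HL2].
pose proof (HL2 (-1)%C g f Hg Hf z Hz) as H.
assert (E : flin (-1)%C g f = fminus f g).
{ apply functional_extensionality. intros w. unfold flin, fminus. ring. }
rewrite E in H. rewrite H. unfold flin. ring.
Qed.

Lemma T_holo f : holo f -> holo (T f).
Proof. apply (proj1 HL). Qed.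
End Lin.

Section Ban.
Variables (Xs : (C -> C) -> Prop) (nX : (C -> C) -> R).
Hypothesis HB : banach_subspace_HD Xs nX.

Lemma X_holo f : Xs f -> holo f.
Proof. apply (proj1 HB). Qed.
Lemma X_zero : Xs (fun _ => 0%C).
Proof. apply HB. Qed.
Lemma X_nonneg f : Xs f -> 0 <= nX f.
Proof. apply HB. Qed.

Lemma X_scal k g : Xs g -> Xs (fun w => k * g w)%C.
Proof.
intros Hg. destruct HB as [_ [_ [H0 [Hlin _]]]].
assert (E : flin k g (fun _ => 0%C) = (fun w => k * g w)%C).
{ apply functional_extensionality. intros w. unfold flin. ring. }
rewrite <- E. apply Hlin; auto.
Qed.

Lemma nX_scal k g : Xs g -> nX (fun w => k * g w)%C = Cmod k * nX g.
Proof. intros Hg. apply HB; auto. Qed.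

Lemma X_minus f g : Xs f -> Xs g -> Xs (fminus f g).
Proof.
intros Hf Hg. destruct HB as [_ [_ [H0 [Hlin _]]]].
assert (E : flin (-1)%C g f = fminus f g).
{ apply functional_extensionality. intros w. unfold flin, fminus. ring. }
rewrite <- E. apply Hlin; auto.
Qed.

Lemma nX_minus f g : Xs f -> Xs g -> nX (fminus f g) <= nX f + nX g.
Proof.
intros Hf Hg. destruct HB as [_ [_ [_ [_ [_ [_ [Hsc [Htri _]]]]]]]].
assert (E : fminus f g = (fun z => Cplus (f z) ((fun w => (-1) * g w)%C z))).
{ apply functional_extensionality. intros w. unfold fminus. simpl. ring. }
rewrite E. eapply Rle_trans. apply Htri; auto. apply X_scal; auto.
rewrite Hsc by auto.
assert (Hm1 : Cmod (-1)%C = 1). { unfold Cmod. simpl. replace (-1 * (-1 * 1) + 0 * (0 * 1)) with 1 by ring. apply sqrt_1. }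
rewrite Hm1. lra.
Qed.

Lemma nX_zero : nX (fun _ => 0%C) = 0.
Proof.
destruct HB as [_ [_ [H0 [_ [_ [_ [Hsc _]]]]]]].
pose proof (Hsc 0%C (fun _ => 0%C) H0) as H.
assert (E : (fun z : C => (0 * 0)%C) = (fun _ => 0%C)).
{ apply functional_extensionality. intros w. ring. }
cbv beta in H. rewrite E, Cmod_0 in H. lra.
Qed.
End Ban.

Lemma Cmod_tri_sub (w z : C) : Cmod w <= Cmod z + Cmod (w - z).
Proof. replace w with (z + (w - z))%C at 1 by ring. apply Cmod_triangle. Qed.

Lemma cderiv_ext_D F G z l : (forall w, inD w -> F w = G w) -> inD z -> cderiv F z l -> cderiv G z l.
Proof.
intros HE Hz Hd. apply eps_deriv. intros eta Heta.
destruct (deriv_eps F z l Hd eta Heta) as [d [Hd0 Hw]].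
exists (Rmin d (1 - Cmod z)). split. apply Rmin_glb_lt; auto. unfold inD in Hz; lra.
intros w Hlt. pose proof (Rmin_l d (1 - Cmod z)). pose proof (Rmin_r d (1 - Cmod z)).
assert (inD w). { unfold inD in *. pose proof (Cmod_tri_sub w z). lra. }
rewrite <- !HE by auto. apply Hw. lra.
Qed.

Lemma cderiv_scal F z l k : cderiv F z l -> cderiv (fun w => k * F w)%C z (k * l)%C.
Proof.
intros Hd. apply eps_deriv. intros eta Heta.
destruct (deriv_eps F z l Hd (eta / (Cmod k + 1))) as [d [Hd0 Hw]].
{ apply Rdiv_lt_0_compat; auto. pose proof (Cmod_ge_0 k); lra. }
exists d. split; auto. intros w Hlt.
replace (k * F w - k * F z - k * l * (w - z))%C with (k * (F w - F z - l * (w - z)))%C by ring.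
rewrite Cmod_mult. specialize (Hw w Hlt).
pose proof (Cmod_ge_0 k). pose proof (Cmod_ge_0 (w - z)).
apply Rle_trans with (Cmod k * (eta / (Cmod k + 1) * Cmod (w - z))).
apply Rmult_le_compat_l; auto.
replace (Cmod k * (eta / (Cmod k + 1) * Cmod (w - z))) with ((Cmod k / (Cmod k + 1)) * (eta * Cmod (w - z))) by (field; lra).
assert (Cmod k / (Cmod k + 1) <= 1). { apply Rmult_le_reg_r with (Cmod k + 1). lra. unfold Rdiv. rewrite Rmult_assoc, Rinv_l by lra. lra. }
assert (0 <= eta * Cmod (w - z)) by nra. nra.
Qed.

Lemma cderiv_unique F z l1 l2 : cderiv F z l1 -> cderiv F z l2 -> l1 = l2.
Proof.
intros H1 H2.
assert (Hb : forall eta, 0 < eta -> Cmod (l1 - l2) <= 2 * eta).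
{ intros eta Heta.
  destruct (deriv_eps F z l1 H1 eta Heta) as [d1 [Hd1 W1]].
  destruct (deriv_eps F z l2 H2 eta Heta) as [d2 [Hd2 W2]].
  set (t := Rmin d1 d2 / 2).
  assert (0 < Rmin d1 d2) by (apply Rmin_glb_lt; auto). assert (Ht : 0 < t) by (unfold t; lra).
  assert (Ht1 : t < d1) by (unfold t; pose proof (Rmin_l d1 d2); lra).
  assert (Ht2 : t < d2) by (unfold t; pose proof (Rmin_r d1 d2); lra).
  set (w := (z + RtoC t)%C).
  assert (Ew : Cmod (w - z) = t). { unfold w. replace (z + RtoC t - z)%C with (RtoC t) by ring. rewrite Cmod_R. apply Rabs_pos_eq; lra. }
  specialize (W1 w ltac:(lra)). specialize (W2 w ltac:(lra)). rewrite Ew in W1, W2.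
  assert (Hm : Cmod ((l1 - l2) * (w - z)) <= 2 * eta * t).
  { replace ((l1 - l2) * (w - z))%C with ((F w - F z - l2 * (w - z)) + - (F w - F z - l1 * (w - z)))%C by ring.
    eapply Rle_trans. apply Cmod_triangle. rewrite Cmod_opp. lra. }
  rewrite Cmod_mult, Ew in Hm. apply Rmult_le_reg_r with t; auto. }
assert (Cmod (l1 - l2) = 0).
{ pose proof (Cmod_ge_0 (l1 - l2)). destruct (Req_dec (Cmod (l1 - l2)) 0); auto.
  specialize (Hb (Cmod (l1 - l2) / 4) ltac:(lra)). lra. }
apply Cmod_eq_0 in H. replace l1 with (l1 - l2 + l2)%C by ring. rewrite H. ring.
Qed.

Lemma cderiv_minus F G z a b : cderiv F z a -> cderiv G z b -> cderiv (fminus F G) z (a - b)%C.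
Proof.
intros H1 H2. apply (is_derive_minus (K:=C_AbsRing) (V:=C_NormedModule) F G z a b H1 H2).
Qed.

Lemma le_eps a b : (forall e, 0 < e -> a <= b + e) -> a <= b.
Proof.
intros H. destruct (Rle_dec a b); auto. exfalso. specialize (H ((a - b) / 2) ltac:(lra)). lra.
Qed.

Lemma Hv_elem v F z : in_Hv v F -> inD z -> v z * Cmod (F z) <= Hv_norm v F.
Proof.
intros [_ [M HM]] Hz. unfold Hv_norm.
destruct (lub_fin (fun x => exists z, inD z /\ x = v z * Cmod (F z)) (v z * Cmod (F z)) M) as [H1 _].
exists z; auto. intros x [w [Hw ->]]. apply HM; auto.
apply H1. exists z; auto.
Qed.

Lemma Hv_le v F K : (forall z, inD z -> 0 <= v z) -> (forall z, inD z -> v z * Cmod (F z) <= K) -> 0 <= Hv_norm v F <= K.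
Proof.
intros Hv HK. unfold Hv_norm.
destruct (lub_fin (fun x => exists z, inD z /\ x = v z * Cmod (F z)) (v 0%C * Cmod (F 0%C)) K) as [H1 H2].
exists 0%C. split; auto. apply inD0. intros x [w [Hw ->]]. apply HK; auto.
split; auto. eapply Rle_trans; [|apply H1]. 2: exists 0%C; split; auto; apply inD0.
apply Rmult_le_pos. apply Hv, inD0. apply Cmod_ge_0.
Qed.

Definition BvS v F := real (Lub_Rbar (fun x => exists z l, inD z /\ cderiv F z l /\ x = v z * Cmod l)).

Lemma Bv_elem v F z l : in_Bv v F -> inD z -> cderiv F z l -> v z * Cmod l <= BvS v F.
Proof.
intros [_ [M HM]] Hz Hl. unfold BvS.
destruct (lub_fin (fun x => exists z l, inD z /\ cderiv F z l /\ x = v z * Cmod l) (v z * Cmod l) M) as [H1 _].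
exists z, l; auto. intros x [w [m [Hw [Hm ->]]]]. apply HM; auto.
apply H1. exists z, l; auto.
Qed.

Lemma Bv_le v F K : holo F -> (forall z, inD z -> 0 <= v z) -> (forall z l, inD z -> cderiv F z l -> v z * Cmod l <= K) -> 0 <= BvS v F <= K.
Proof.
intros HF Hv HK. unfold BvS. destruct (cdiff_holo F 0%C HF inD0) as [l0 Hl0].
destruct (lub_fin (fun x => exists z l, inD z /\ cderiv F z l /\ x = v z * Cmod l) (v 0%C * Cmod l0) K) as [H1 H2].
exists 0%C, l0; split; [apply inD0| split; [exact Hl0|reflexivity]]. intros x [w [m [Hw [Hm ->]]]]. apply HK; auto.
split; auto. eapply Rle_trans; [|apply H1]. 2: exists 0%C, l0; split; [apply inD0| split; [exact Hl0|reflexivity]].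
apply Rmult_le_pos. apply Hv, inD0. apply Cmod_ge_0.
Qed.

Lemma Bv_norm_eq v F : Bv_norm v F = Cmod (F 0%C) + BvS v F.
Proof. reflexivity. Qed.

Section Dual.
Variables (v : C -> R) (T : (C -> C) -> (C -> C)) (Xs : (C -> C) -> Prop) (nX : (C -> C) -> R).
Hypothesis HL : linear_HD T.
Hypothesis HB : banach_subspace_HD Xs nX.

Lemma scale_unit g d : Xs g -> 0 < d ->
  let k := / (nX g + d) in Xs (fun w => RtoC k * g w)%C /\ nX (fun w => RtoC k * g w)%C <= 1 /\ 0 < k.
Proof.
intros Hg Hd k. pose proof (X_nonneg Xs nX HB g Hg).
assert (Hk : 0 < k) by (unfold k; apply Rinv_0_lt_compat; lra).
split. apply (X_scal Xs nX HB); auto. split; auto.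
rewrite (nX_scal Xs nX HB) by auto. rewrite Cmod_RtoC_pos by lra. unfold k.
apply Rmult_le_reg_l with (nX g + d). lra. rewrite <- Rmult_assoc, Rinv_r by lra. lra.
Qed.

Lemma dualH z : bounded_op Xs nX (in_Hv v) (Hv_norm v) T -> 0 < v z -> inD z ->
  0 <= dual_norm Xs nX (adjT_KH T z) /\
  forall g, Xs g -> Cmod (T g z) <= dual_norm Xs nX (adjT_KH T z) * nX g.
Proof.
intros [HY [M HM]] Hv Hz.
set (Mp := Rmax M 0).
set (E := fun x => exists f c, Xs f /\ nX f <= 1 /\ adjT_KH T z f c /\ x = Cmod c).
destruct (lub_fin E 0 (Mp / v z)) as [H1 H2].
{ exists (fun _ => 0%C), 0%C. split. apply (X_zero Xs nX HB). split. rewrite (nX_zero Xs nX HB); lra.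
  split. unfold adjT_KH. rewrite (T_zero T HL); auto. rewrite Cmod_0; auto. }
{ intros x [f [c [Hf [Hn [Hc ->]]]]]. unfold adjT_KH in Hc. subst c.
  pose proof (Hv_elem v (T f) z (HY f Hf) Hz). pose proof (HM f Hf).
  pose proof (X_nonneg Xs nX HB f Hf).
  assert (M * nX f <= Mp). { unfold Mp. pose proof (Rmax_l M 0). pose proof (Rmax_r M 0). nra. }
  apply Rmult_le_reg_l with (v z); auto. replace (v z * (Mp / v z)) with Mp by (field; lra). lra. }
fold E. unfold dual_norm. fold E. set (S := real (Lub_Rbar E)) in *.
assert (HS : 0 <= S).
{ apply H1. exists (fun _ => 0%C), 0%C. split. apply (X_zero Xs nX HB). split. rewrite (nX_zero Xs nX HB); lra.
  split. unfold adjT_KH. rewrite (T_zero T HL); auto. rewrite Cmod_0; auto. }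
split; auto.
intros g Hg. apply le_eps. intros e He.
set (d := e / (S + 1)). assert (Hd : 0 < d) by (unfold d; apply Rdiv_lt_0_compat; lra).
destruct (scale_unit g d Hg Hd) as [Xk [Nk Kk]]. set (k := / (nX g + d)) in *.
assert (Hel : Cmod (T (fun w => RtoC k * g w)%C z) <= S).
{ apply H1. exists (fun w => RtoC k * g w)%C, (T (fun w => RtoC k * g w)%C z). repeat split; auto. }
rewrite (T_scal T HL) in Hel; auto. 2: apply (X_holo Xs nX HB); auto.
rewrite Cmod_mult, Cmod_RtoC_pos in Hel by lra.
pose proof (X_nonneg Xs nX HB g Hg).
assert (Cmod (T g z) <= S * (nX g + d)).
{ apply Rmult_le_reg_l with k; auto. replace (k * (S * (nX g + d))) with S. lra. unfold k. field. lra. }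
assert (S * d <= e). { unfold d. apply Rmult_le_reg_r with (S + 1). lra. replace (S * (e / (S + 1)) * (S + 1)) with (S * e) by (field; lra). nra. }
nra.
Qed.

Lemma dualB z : bounded_op Xs nX (in_Bv v) (Bv_norm v) T -> 0 < v z -> inD z ->
  0 <= dual_norm Xs nX (adjT_KB1 T z) /\
  forall g l, Xs g -> cderiv (T g) z l -> Cmod l <= dual_norm Xs nX (adjT_KB1 T z) * nX g.
Proof.
intros [HY [M HM]] Hv Hz.
set (Mp := Rmax M 0).
set (E := fun x => exists f c, Xs f /\ nX f <= 1 /\ adjT_KB1 T z f c /\ x = Cmod c).
destruct (cdiff_holo (T (fun _ => 0%C)) z (T_holo T HL _ holo_zero) Hz) as [c0 Hc0].
destruct (lub_fin E (Cmod c0) (Mp / v z)) as [H1 H2].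
{ exists (fun _ => 0%C), c0. split. apply (X_zero Xs nX HB). split. rewrite (nX_zero Xs nX HB); lra.
  split; auto. }
{ intros x [f [c [Hf [Hn [Hc ->]]]]]. unfold adjT_KB1 in Hc.
  pose proof (Bv_elem v (T f) z c (HY f Hf) Hz Hc). pose proof (HM f Hf).
  rewrite Bv_norm_eq in H0. pose proof (Cmod_ge_0 (T f 0%C)).
  pose proof (X_nonneg Xs nX HB f Hf).
  assert (M * nX f <= Mp). { unfold Mp. pose proof (Rmax_l M 0). pose proof (Rmax_r M 0). nra. }
  apply Rmult_le_reg_l with (v z); auto. replace (v z * (Mp / v z)) with Mp by (field; lra). lra. }
fold E. unfold dual_norm. fold E. set (S := real (Lub_Rbar E)) in *.
assert (HS : 0 <= S).
{ eapply Rle_trans. apply (Cmod_ge_0 c0). apply H1. exists (fun _ => 0%C), c0. split. apply (X_zero Xs nX HB). split. rewrite (nX_zero Xs nX HB); lra.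
  split; auto. }
split; auto.
intros g l Hg Hl. apply le_eps. intros e He.
set (d := e / (S + 1)). assert (Hd : 0 < d) by (unfold d; apply Rdiv_lt_0_compat; lra).
destruct (scale_unit g d Hg Hd) as [Xk [Nk Kk]]. set (k := / (nX g + d)) in *.
assert (Hder : cderiv (T (fun w => RtoC k * g w)%C) z (RtoC k * l)%C).
{ apply (cderiv_ext_D (fun w => RtoC k * T g w)%C); auto.
  intros w Hw. rewrite (T_scal T HL); auto. apply (X_holo Xs nX HB); auto.
  apply cderiv_scal; auto. }
assert (Hel : Cmod (RtoC k * l) <= S).
{ apply H1. exists (fun w => RtoC k * g w)%C, (RtoC k * l)%C. split; [auto| split; [auto| split; [exact Hder | reflexivity]]]. }
rewrite Cmod_mult, Cmod_RtoC_pos in Hel by lra.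
pose proof (X_nonneg Xs nX HB g Hg).
assert (Cmod l <= S * (nX g + d)).
{ apply Rmult_le_reg_l with k; auto. replace (k * (S * (nX g + d))) with S. lra. unfold k. field. lra. }
assert (S * d <= e). { unfold d. apply Rmult_le_reg_r with (S + 1). lra. replace (S * (e / (S + 1)) * (S + 1)) with (S * e) by (field; lra). nra. }
nra.
Qed.
End Dual.

Lemma uc_T T gs f : intrinsic T -> (forall k, holo (gs k)) -> holo f -> uc_conv gs f ->
  forall r eps, 0 <= r < 1 -> 0 < eps -> exists N, forall k, (N <= k)%nat ->
    forall z, Cmod z <= r -> Cmod (T (gs k) z - T f z) < eps.
Proof.
intros [HL Hconv] Hg Hf Huc r eps Hr Heps.
set (s := fun n => if Nat.even n then gs (Nat.div2 n) else f).
assert (Hs : forall n, holo (s n)). { intros n. unfold s. destruct (Nat.even n); auto. }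
assert (Hus : uc_conv s f).
{ intros r0 e0 Hr0 He0. destruct (Huc r0 e0 Hr0 He0) as [N HN].
  exists (2 * N)%nat. intros n Hn z Hz. unfold s. destruct (Nat.even n) eqn:Ev.
  - apply (HN (Nat.div2 n)); [|exact Hz]. pose proof (Nat.div2_odd n) as Hd. destruct (Nat.odd n); simpl in Hd; lia.
  - cbv iota. replace (Cmod (f z - f z)) with 0 by (unfold Cminus; rewrite Cplus_opp_r, Cmod_0; reflexivity). auto. }
destruct (Hconv s f Hs Hf Hus) as [h [Hh Huh]].
destruct (Huh r (eps / 2) Hr ltac:(lra)) as [N0 HN0].
exists N0. intros k Hk z Hz.
pose proof (HN0 (2 * k)%nat ltac:(lia) z Hz) as A.
pose proof (HN0 (2 * N0 + 1)%nat ltac:(lia) z Hz) as B.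
unfold s in A, B. rewrite Nat.even_even, Nat.div2_double in A. rewrite Nat.even_odd in B.
replace (T (gs k) z - T f z)%C with ((T (gs k) z - h z) + - (T f z - h z))%C by ring.
eapply Rle_lt_trans. apply Cmod_triangle. rewrite Cmod_opp. lra.
Qed.

Lemma weight_case (v : C -> R) (S eps1 : R) (N : nat) (z : C) : 0 < v z -> 0 <= S -> 0 < INR N ->
  (INR N < S -> v z * S <= eps1) -> v z < eps1 / INR N -> 0 <= eps1 -> v z * S <= eps1.
Proof.
intros Hv HS HN H1 H2 He. destruct (Rlt_dec (INR N) S) as [H|H]. auto.
apply Rle_trans with (eps1 / INR N * INR N). apply Rmult_le_compat; lra.
right. field. lra.
Qed.

Theorem part1 (v : C -> R) (T : (C -> C) -> (C -> C)) (Xs : (C -> C) -> Prop) (nX : (C -> C) -> R) :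
  typical_weight v -> intrinsic T -> initial_space Xs nX ->
  bounded_op Xs nX (in_Hv v) (Hv_norm v) T ->
  sup_DN_tends_to_0 v (fun z => dual_norm Xs nX (adjT_KH T z)) ->
  compact_op Xs nX (in_Hv v) (Hv_norm v) T.
Proof.
intros Hv HT HX Hbd Hsup fs Hfs.
destruct HX as [HB [_ Hcpt]]. pose proof HT as [HL _].
destruct Hv as [_ [Hpos [_ [_ Hsmall]]]].
destruct (Hcpt fs Hfs) as [phi [f [Hphi [Xf Huc]]]].
exists phi, (T f). split; auto. split. apply (proj1 Hbd); auto.
apply is_lim_seq_spec. intros eps.
pose proof (X_nonneg Xs nX HB f Xf) as Hnf.
set (C0 := nX f + 1).
set (eps1 := eps / (2 * C0)).
assert (He1 : 0 < eps1) by (unfold eps1, C0; apply Rdiv_lt_0_compat; [apply cond_pos|lra]).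
destruct (Hsup eps1 He1) as [N0 HN0].
set (N := S N0).
assert (HNpos : 0 < INR N) by (unfold N; rewrite S_INR; pose proof (pos_INR N0); lra).
destruct (Hsmall (eps1 / INR N) ltac:(apply Rdiv_lt_0_compat; lra)) as [r [Hr Hrs]].
destruct (uc_T T (fun k => fs (phi k)) f HT (fun k => X_holo Xs nX HB _ (proj1 (Hfs (phi k)))) (X_holo Xs nX HB f Xf) Huc r (eps / 2) Hr ltac:(pose proof (cond_pos eps); lra)) as [K HK].
exists K. intros k Hk.
set (gk := fminus (fs (phi k)) f).
assert (Xg : Xs gk) by (apply (X_minus Xs nX HB); auto; apply Hfs).
assert (Ng : nX gk <= C0). { pose proof (nX_minus Xs nX HB (fs (phi k)) f (proj1 (Hfs _)) Xf). pose proof (proj2 (Hfs (phi k))). unfold C0, gk. lra. }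
assert (Hb : 0 <= Hv_norm v (fminus (T (fs (phi k))) (T f)) <= eps / 2).
{ apply Hv_le. intros z Hz. pose proof (Hpos z Hz); lra.
  intros z Hz. unfold fminus. destruct (Hpos z Hz) as [Hv0 Hv1].
  destruct (Rle_dec (Cmod z) r) as [Hzr|Hzr].
  - pose proof (HK k Hk z Hzr). pose proof (Cmod_ge_0 (T (fs (phi k)) z - T f z)). nra.
  - rewrite <- (T_minus T HL) by (auto; try apply (X_holo Xs nX HB); auto; apply Hfs).
    fold gk. destruct (dualH v T Xs nX HL HB z Hbd Hv0 Hz) as [HS HD].
    set (S := dual_norm Xs nX (adjT_KH T z)) in *.
    assert (v z * S <= eps1).
    { apply (weight_case v S eps1 N z); auto; try lra.
      intros HNS. apply (HN0 N); auto. unfold N; lia.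
      apply Hrs; auto; lra. }
    pose proof (HD gk Xg). pose proof (X_nonneg Xs nX HB gk Xg).
    apply Rle_trans with (v z * (S * C0)). apply Rmult_le_compat_l; [lra|]. eapply Rle_trans; [exact H0|]. apply Rmult_le_compat_l; auto.
    replace (eps / 2) with (eps1 * C0) by (unfold eps1, C0; field; lra).
    rewrite <- Rmult_assoc. apply Rmult_le_compat_r; lra. }
rewrite Rminus_0_r, Rabs_pos_eq by lra. pose proof (cond_pos eps). lra.
Qed.

Lemma holo_fminus F G : holo F -> holo G -> holo (fminus F G).
Proof.
intros HF HG z Hz. destruct (cdiff_holo F z HF Hz) as [a Ha]. destruct (cdiff_holo G z HG Hz) as [b Hb].
exists (a - b)%C. apply cderiv_minus; auto.
Qed.

Theorem part2 (v : C -> R) (T : (C -> C) -> (C -> C)) (Xs : (C -> C) -> Prop) (nX : (C -> C) -> R) :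
  typical_weight v -> intrinsic T -> initial_space Xs nX ->
  bounded_op Xs nX (in_Bv v) (Bv_norm v) T ->
  sup_DN_tends_to_0 v (fun z => dual_norm Xs nX (adjT_KB1 T z)) ->
  compact_op Xs nX (in_Bv v) (Bv_norm v) T.
Proof.
intros Hv HT HX Hbd Hsup fs Hfs.
destruct HX as [HB [_ Hcpt]]. pose proof HT as [HL _].
destruct Hv as [_ [Hpos [_ [_ Hsmall]]]].
destruct (Hcpt fs Hfs) as [phi [f [Hphi [Xf Huc]]]].
exists phi, (T f). split; auto. split. apply (proj1 Hbd); auto.
apply is_lim_seq_spec. intros eps. pose proof (cond_pos eps) as Heps.
pose proof (X_nonneg Xs nX HB f Xf) as Hnf.
set (C0 := nX f + 1).
set (eps3 := eps / 3).
set (eps1 := eps3 / C0).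
assert (He1 : 0 < eps1) by (unfold eps1, eps3, C0; apply Rdiv_lt_0_compat; lra).
destruct (Hsup eps1 He1) as [N0 HN0].
set (N := S N0).
assert (HNpos : 0 < INR N) by (unfold N; rewrite S_INR; pose proof (pos_INR N0); lra).
destruct (Hsmall (eps1 / INR N) ltac:(apply Rdiv_lt_0_compat; lra)) as [r [Hr Hrs]].
set (a := (1 - r) / 4). assert (Ha : 0 < a) by (unfold a; lra).
set (r' := r + 2 * a). assert (Hr' : 0 <= r' < 1) by (unfold r', a; lra).
set (del := eps3 * a / 4). assert (Hdel : 0 < del) by (unfold del, eps3; apply Rdiv_lt_0_compat; [apply Rmult_lt_0_compat|]; lra).
assert (Hf0 : forall k, holo (fs (phi k))) by (intros k; apply (X_holo Xs nX HB), Hfs).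
assert (Hff : holo f) by (apply (X_holo Xs nX HB); auto).
destruct (uc_T T (fun k => fs (phi k)) f HT Hf0 Hff Huc r' (Rmin del eps3) Hr' ltac:(apply Rmin_glb_lt; unfold eps3; lra)) as [K HK].
exists K. intros k Hk.
set (gk := fminus (fs (phi k)) f).
assert (Xg : Xs gk) by (apply (X_minus Xs nX HB); auto; apply Hfs).
assert (Ng : nX gk <= C0). { pose proof (nX_minus Xs nX HB (fs (phi k)) f (proj1 (Hfs _)) Xf). pose proof (proj2 (Hfs (phi k))). unfold C0, gk. lra. }
set (Fk := fminus (T (fs (phi k))) (T f)).
assert (HFk : holo Fk) by (apply holo_fminus; apply (T_holo T HL); auto).
assert (HFT : forall w, inD w -> Fk w = T gk w).
{ intros w Hw. unfold Fk, gk. rewrite (T_minus T HL); auto. }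
assert (Hsm : forall w, Cmod w <= r' -> Cmod (Fk w) < Rmin del eps3).
{ intros w Hw. apply (HK k Hk w Hw). }
assert (H0 : Cmod (Fk 0%C) < eps3).
{ eapply Rlt_le_trans. apply Hsm. rewrite Cmod_0; lra. apply Rmin_r. }
assert (Hb : 0 <= BvS v Fk <= eps3).
{ apply Bv_le; auto. intros z Hz. pose proof (Hpos z Hz); lra.
  intros z l Hz Hl. destruct (Hpos z Hz) as [Hv0 Hv1].
  destruct (Rle_dec (Cmod z) r) as [Hzr|Hzr].
  - destruct z as [zx zy].
    assert (HC : Cmod l <= 4 * del / a).
    { apply (cauchy_est Fk zx zy a del l Ha); auto.
      - intros x y Hx Hy. apply cdiff_holo; auto. unfold inD.
        eapply Rle_lt_trans. apply (Cmod_tri_sub (x, y) (zx, zy)).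
        pose proof (cm_ub x y zx zy a (abs_le_d x zx a Hx) (abs_le_d y zy a Hy)). unfold r' in Hr'. lra.
      - intros x y Hx Hy. apply Rlt_le. eapply Rlt_le_trans. apply Hsm. 2: apply Rmin_l.
        eapply Rle_trans. apply (Cmod_tri_sub (x, y) (zx, zy)).
        pose proof (cm_ub x y zx zy a (abs_le_d x zx a Hx) (abs_le_d y zy a Hy)). unfold r'. lra. }
    assert (4 * del / a = eps3) by (unfold del; field; lra).
    pose proof (Cmod_ge_0 l). nra.
    assert (HlT : cderiv (T gk) z l) by (apply (cderiv_ext_D Fk); auto).
    destruct (dualB v T Xs nX HL HB z Hbd Hv0 Hz) as [HS HD].
    set (S := dual_norm Xs nX (adjT_KB1 T z)) in *.
    assert (v z * S <= eps1).
    { apply (weight_case v S eps1 N z); auto; try lra.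
      intros HNS. apply (HN0 N); auto. unfold N; lia.
      apply Hrs; auto; lra. }
    pose proof (HD gk l Xg HlT). pose proof (X_nonneg Xs nX HB gk Xg).
    apply Rle_trans with (v z * (S * C0)). apply Rmult_le_compat_l; [lra|]. eapply Rle_trans; [exact H1|]. apply Rmult_le_compat_l; auto.
    replace eps3 with (eps1 * C0) by (unfold eps1, C0; field; lra).
    rewrite <- Rmult_assoc. apply Rmult_le_compat_r; lra. }
rewrite Rminus_0_r. fold Fk. rewrite Bv_norm_eq. pose proof (Cmod_ge_0 (Fk 0%C)).
rewrite Rabs_pos_eq by lra. unfold eps3 in *. lra.
Qed.

Theorem proposition3p1 (v : C -> R) (T : (C -> C) -> (C -> C))
    (Xs : (C -> C) -> Prop) (nX : (C -> C) -> R) :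
  typical_weight v -> intrinsic T -> initial_space Xs nX ->
  (bounded_op Xs nX (in_Hv v) (Hv_norm v) T ->
   sup_DN_tends_to_0 v (fun z => dual_norm Xs nX (adjT_KH T z)) ->
   compact_op Xs nX (in_Hv v) (Hv_norm v) T) /\
  (bounded_op Xs nX (in_Bv v) (Bv_norm v) T ->
   sup_DN_tends_to_0 v (fun z => dual_norm Xs nX (adjT_KB1 T z)) ->
   compact_op Xs nX (in_Bv v) (Bv_norm v) T).
Proof.
intros Hv HT HX. split.
- intros Hbd Hsup. exact (part1 v T Xs nX Hv HT HX Hbd Hsup).
- intros Hbd Hsup. exact (part2 v T Xs nX Hv HT HX Hbd Hsup).
Qed.
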